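(* Let $g\in\mathcal{H}(\mathbb{D})$ be zero-free, let $h$ be a branch of the logarithm of $g$, and for $\beta\in\mathbb{R}$ set $g^\beta:=e^{\beta h}$. Then for every $\beta\in\mathbb{R}$ and every $\varepsilon\in\mathbb{R}\setminus\{1\}$, \[ S_{g^\beta}T_{g^\beta}^2=\frac{(2\beta-1)\beta}{1-\varepsilon}\,T_gT_{g^{1-\varepsilon}}M_{g^{2\beta-2+\varepsilon}}T_{g^\beta}+\frac{\beta^2}{1-\varepsilon}\,T_gT_{g^{1-\varepsilon}}M_{g^{3\beta-2+\varepsilon}} \] as operators on $\mathcal{H}(\mathbb{D})$.
   Context: $\mathcal{H}(\mathbb{D})$ is the space of analytic functions on the unit disc. For analytic $u$: $M_uf=uf$, $T_uf(z)=\int_0^zf(\zeta)u'(\zeta)\,d\zeta$, $S_uf(z)=\int_0^zf'(\zeta)u(\zeta)\,d\zeta$. *)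

(* Defs.v *)
From Stdlib Require Import Reals ClassicalEpsilon.
From Coquelicot Require Import Coquelicot.
Open Scope R_scope.

Definition inD (z : C) : Prop := Cmod z < 1.

Definition Cderivable (f : C -> C) (z : C) : Prop :=
  exists l : C, @is_derive C_AbsRing C_NormedModule f z l.

Definition holoD (f : C -> C) : Prop := forall z, inD z -> Cderivable f z.

(* the complex derivative f'(z) (meaningful where f is differentiable) *)
Definition Cderiv (f : C -> C) (z : C) : C :=
  epsilon (inhabits (RtoC 0))
    (fun l : C => @is_derive C_AbsRing C_NormedModule f z l).

Definition Cexp (z : C) : C :=
  (exp (fst z) * cos (snd z), exp (fst z) * sin (snd z)).

(* integral from 0 to z along the segment [0,z]: zeta = t z, d zeta = z dt *)
Definition cint0 (F : C -> C) (z : C) : C :=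
  Cmult z (@RInt C_R_CompleteNormedModule (fun t : R => F (Cmult (RtoC t) z)) 0 1).

Definition Mop (u f : C -> C) : C -> C := fun z => Cmult (u z) (f z).
Definition Top (u f : C -> C) : C -> C :=
  fun z => cint0 (fun w => Cmult (f w) (Cderiv u w)) z.
Definition Sop (u f : C -> C) : C -> C :=
  fun z => cint0 (fun w => Cmult (Cderiv f w) (u w)) z.

Definition cpow (h : C -> C) (beta : R) : C -> C :=
  fun z => Cexp (Cmult (RtoC beta) (h z)).

(* Main.v *)
Require Import Defs.
From Stdlib Require Import Reals.
From Coquelicot Require Import Coquelicot.
From Stdlib Require Import Lra Lia ClassicalEpsilon.
Open Scope R_scope.

Open Scope R_scope.
Open Scope R_scope.

Lemma is_derive_eps {K : AbsRing} {V : NormedModule K} (f : K -> V) x l :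
  is_derive f x l <->
  (forall eps, 0 < eps -> exists del, 0 < del /\ forall y,
     norm (minus y x) < del ->
     norm (minus (minus (f y) (f x)) (scal (minus y x) l)) <= eps * norm (minus y x)).
Proof.
  split.
  - intros [_ H] eps Heps.
    specialize (H x (fun P HP => HP) (mkposreal eps Heps)).
    destruct H as [del Hd].
    exists del; split; [apply cond_pos|].
    intros y Hy. apply Hd. exact (norm_compat1 (V := AbsRing_NormedModule K) x y del Hy).
  - intros H. split; [apply is_linear_scal_l|].
    intros x0 Hx0. apply (is_filter_lim_locally_unique (V := AbsRing_NormedModule K)) in Hx0. subst x0.
    intros eps. destruct (H eps (cond_pos eps)) as [del [Hd H']].
    assert (Hnf : 0 < norm_factor (V := AbsRing_NormedModule K)) by apply norm_factor_gt_0.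
    assert (Hp : 0 < del / norm_factor (V := AbsRing_NormedModule K)).
    { apply Rdiv_lt_0_compat; auto. }
    exists (mkposreal _ Hp). intros y Hy.
    apply H'. apply (norm_compat2 (V := AbsRing_NormedModule K)) in Hy. simpl in Hy.
    replace del with (norm_factor (V := AbsRing_NormedModule K) * (del / norm_factor (V := AbsRing_NormedModule K))).
    exact Hy. field. lra.
Qed.

Open Scope C_scope.

Definition Dl (G : C -> C) (z l : C) : Prop :=
  forall eps, (0 < eps)%R -> exists del, (0 < del)%R /\ forall w,
    (Cmod (w - z) < del)%R -> (Cmod (G w - G z - (w - z) * l) <= eps * Cmod (w - z))%R.

Lemma is_derive_Dl (G : C -> C) z l :
  @is_derive C_AbsRing C_NormedModule G z l <-> Dl G z l.
Proof. exact (is_derive_eps (K := C_AbsRing) (V := C_NormedModule) G z l). Qed.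

Lemma prod_norm_Cmod (x : C) : @norm R_AbsRing C_R_NormedModule x = Cmod x.
Proof.
  destruct x as [x1 x2]. unfold norm. simpl. unfold prod_norm, Cmod. simpl.
  f_equal. change (norm x1) with (Rabs x1). change (norm x2) with (Rabs x2).
  rewrite !Rmult_1_r, <- !Rabs_mult, !Rabs_right; try nra; reflexivity.
Qed.

Lemma scal_CR (r : R) (x : C) : @scal R_AbsRing C_R_NormedModule r x = RtoC r * x.
Proof.
  destruct x as [x1 x2]. unfold scal. simpl. unfold prod_scal, Cmult, RtoC. simpl.
  unfold scal; simpl. unfold mult; simpl. f_equal; ring.
Qed.

Lemma plus_CR (x y : C) : @plus C_R_NormedModule x y = x + y.
Proof. destruct x, y. reflexivity. Qed.

Lemma minus_CR (x y : C) : @minus C_R_NormedModule x y = x - y.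
Proof. destruct x, y. reflexivity. Qed.

Lemma opp_CR (x : C) : @opp C_R_NormedModule x = - x.
Proof. destruct x. reflexivity. Qed.

Definition DlR (phi : R -> C) (t0 : R) (v : C) : Prop :=
  forall eps, (0 < eps)%R -> exists del, (0 < del)%R /\ forall t,
    (Rabs (t - t0) < del)%R ->
    (Cmod (phi t - phi t0 - RtoC (t - t0) * v) <= eps * Rabs (t - t0))%R.

Lemma is_derive_DlR (phi : R -> C) t0 v :
  @is_derive R_AbsRing C_R_NormedModule phi t0 v <-> DlR phi t0 v.
Proof.
  rewrite is_derive_eps. unfold DlR.
  split; intros H eps Heps; destruct (H eps Heps) as [del [Hd H']];
    exists del; split; auto; intros t Ht.
  - specialize (H' t Ht). rewrite prod_norm_Cmod, scal_CR, !minus_CR in H'. exact H'.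
  - rewrite prod_norm_Cmod, scal_CR, !minus_CR. exact (H' t Ht).
Qed.

Open Scope R_scope.
Open Scope R_scope.
Open Scope C_scope.

Lemma is_derive_Dl' (G : C -> C) z l :
  @is_derive C_AbsRing (AbsRing_NormedModule C_AbsRing) G z l <-> Dl G z l.
Proof. exact (is_derive_eps (K := C_AbsRing) (V := AbsRing_NormedModule C_AbsRing) G z l). Qed.

Lemma Dl_const (c z : C) : Dl (fun _ => c) z 0.
Proof.
  intros eps Heps. exists 1%R. split; [lra|]. intros w _.
  replace (c - c - (w - z) * 0) with (RtoC 0) by ring. rewrite Cmod_0.
  apply Rmult_le_pos; [lra| apply Cmod_ge_0].
Qed.

Lemma Dl_id (z : C) : Dl (fun w => w) z 1.
Proof.
  intros eps Heps. exists 1%R. split; [lra|]. intros w _.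
  replace (w - z - (w - z) * 1) with (RtoC 0) by ring. rewrite Cmod_0.
  apply Rmult_le_pos; [lra| apply Cmod_ge_0].
Qed.

Lemma Dl_plus f g z a b : Dl f z a -> Dl g z b -> Dl (fun w => f w + g w) z (a + b).
Proof.
  rewrite <- !is_derive_Dl. intros Ha Hb.
  exact (is_derive_plus (K := C_AbsRing) (V := C_NormedModule) f g z a b Ha Hb).
Qed.

Lemma Dl_minus f g z a b : Dl f z a -> Dl g z b -> Dl (fun w => f w - g w) z (a - b).
Proof.
  rewrite <- !is_derive_Dl. intros Ha Hb.
  exact (is_derive_minus (K := C_AbsRing) (V := C_NormedModule) f g z a b Ha Hb).
Qed.

Lemma Dl_mult f g z a b : Dl f z a -> Dl g z b -> Dl (fun w => f w * g w) z (a * g z + f z * b).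
Proof.
  rewrite <- !is_derive_Dl'. intros Ha Hb.
  exact (is_derive_mult (K := C_AbsRing) f g z a b Ha Hb Cmult_comm).
Qed.

Lemma Dl_comp f g z df dg : Dl f (g z) df -> Dl g z dg -> Dl (fun w => f (g w)) z (dg * df).
Proof.
  intros Hf Hg. apply is_derive_Dl. apply is_derive_Dl in Hf. apply is_derive_Dl' in Hg.
  exact (is_derive_comp (K := C_AbsRing) (V := C_NormedModule) f g z df dg Hf Hg).
Qed.

Lemma Dl_ext f g z l : Dl f z l -> (forall w, g w = f w) -> Dl g z l.
Proof.
  intros H E eps Heps. destruct (H eps Heps) as [d [Hd H']]. exists d; split; auto.
  intros w Hw. rewrite !E. auto.
Qed.


Lemma Dl_eq f z l l' : Dl f z l -> l = l' -> Dl f z l'.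
Proof. intros H ->. exact H. Qed.

Lemma Dl_scal c f z a : Dl f z a -> Dl (fun w => c * f w) z (c * a).
Proof.
  intros H. apply (Dl_eq _ _ (0 * f z + c * a)).
  apply (Dl_mult (fun _ => c) f z 0 a). apply Dl_const. exact H. ring.
Qed.

Lemma Dl_ext_loc f g z l : Dl f z l ->
  (exists del, (0 < del)%R /\ forall w, (Cmod (w - z) < del)%R -> g w = f w) -> Dl g z l.
Proof.
  intros H [d0 [Hd0 E]] eps Heps. destruct (H eps Heps) as [d [Hd H']].
  exists (Rmin d d0); split. apply Rmin_pos; auto.
  intros w Hw. rewrite (E w), (E z). apply H'. eapply Rlt_le_trans; [exact Hw| apply Rmin_l].
  replace (z - z) with (RtoC 0) by ring. rewrite Cmod_0. auto.
  eapply Rlt_le_trans; [exact Hw| apply Rmin_r].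
Qed.

Lemma Cmod_sub_sym (a b : C) : Cmod (a - b) = Cmod (b - a).
Proof. replace (a - b) with (- (b - a)) by ring. apply Cmod_opp. Qed.

Lemma Dl_unique f z l1 l2 : Dl f z l1 -> Dl f z l2 -> l1 = l2.
Proof.
  intros H1 H2. destruct (Req_dec (Cmod (l1 - l2)) 0) as [E|E].
  - apply Cmod_eq_0 in E. replace l1 with ((l1 - l2) + l2) by ring. rewrite E. ring.
  - exfalso. assert (Hp : (0 < Cmod (l1 - l2))%R) by (pose proof (Cmod_ge_0 (l1 - l2)); lra).
    set (e := (Cmod (l1 - l2) / 4)%R).
    assert (He : (0 < e)%R) by (unfold e; lra).
    destruct (H1 e He) as [d1 [Hd1 K1]]. destruct (H2 e He) as [d2 [Hd2 K2]].
    set (h := (Rmin d1 d2 / 2)%R).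
    assert (Hh : (0 < h)%R) by (unfold h; pose proof (Rmin_pos _ _ Hd1 Hd2); lra).
    assert (Hh1 : (h < d1)%R) by (unfold h; pose proof (Rmin_l d1 d2); lra).
    assert (Hh2 : (h < d2)%R) by (unfold h; pose proof (Rmin_r d1 d2); lra).
    set (w := z + RtoC h).
    assert (Ew : Cmod (w - z) = h).
    { unfold w. replace (z + RtoC h - z) with (RtoC h) by ring. rewrite Cmod_R. apply Rabs_right; lra. }
    specialize (K1 w). specialize (K2 w). rewrite Ew in K1, K2.
    specialize (K1 Hh1). specialize (K2 Hh2).
    assert (T : Cmod ((w - z) * (l1 - l2)) <= e * h + e * h).
    { replace ((w - z) * (l1 - l2)) with (- (f w - f z - (w - z) * l1) + (f w - f z - (w - z) * l2)) by ring.
      eapply Rle_trans. apply Cmod_triangle. rewrite Cmod_opp. lra. }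
    rewrite Cmod_mult, Ew in T. unfold e in T. nra.
Qed.

Lemma Cderiv_spec f z : Cderivable f z -> Dl f z (Cderiv f z).
Proof.
  intros H. apply is_derive_Dl. unfold Cderiv. apply epsilon_spec. exact H.
Qed.

Lemma Cderiv_eq f z l : Dl f z l -> Cderiv f z = l.
Proof.
  intros H. apply (Dl_unique f z). apply Cderiv_spec. exists l. apply is_derive_Dl. exact H. exact H.
Qed.

Lemma Dl_lip f z l : Dl f z l -> exists del, (0 < del)%R /\ forall w,
  (Cmod (w - z) < del)%R -> (Cmod (f w - f z) <= (Cmod l + 1) * Cmod (w - z))%R.
Proof.
  intros H. destruct (H 1%R Rlt_0_1) as [d [Hd H']]. exists d; split; auto.
  intros w Hw. specialize (H' w Hw).
  replace (f w - f z) with ((f w - f z - (w - z) * l) + (w - z) * l) by ring.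
  eapply Rle_trans. apply Cmod_triangle. rewrite Cmod_mult. nra.
Qed.

Lemma Dl_inv (z : C) : z <> 0 -> Dl (fun w => / w) z (- / (z * z)).
Proof.
  intros Hz eps Heps.
  assert (Hm : (0 < Cmod z)%R) by (apply (proj1 (Cmod_gt_0 z)); auto).
  set (d := Rmin (Cmod z / 2) (eps * (Cmod z * Cmod z * Cmod z) / 2)).
  exists d. split. unfold d; apply Rmin_pos; [lra|]. apply Rdiv_lt_0_compat; [|lra].
  apply Rmult_lt_0_compat; auto. apply Rmult_lt_0_compat; auto. apply Rmult_lt_0_compat; auto.
  intros w Hw.
  assert (Hw1 : (Cmod (w - z) < Cmod z / 2)%R) by (eapply Rlt_le_trans; [exact Hw| apply Rmin_l]).
  assert (Hw2 : (Cmod (w - z) < eps * (Cmod z * Cmod z * Cmod z) / 2)%R) by (eapply Rlt_le_trans; [exact Hw| apply Rmin_r]).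
  assert (Hwm : (Cmod z / 2 <= Cmod w)%R).
  { assert (T := Cmod_triangle (z - w) w). replace (z - w + w) with z in T by ring.
    rewrite Cmod_sub_sym in T. lra. }
  assert (Hw0 : w <> 0). { intro E. rewrite E, Cmod_0 in Hwm. lra. }
  replace (/ w - / z - (w - z) * - / (z * z)) with ((w - z) * (w - z) / (w * (z * z))) by (field; auto).
  rewrite Cmod_div, !Cmod_mult. 2: { apply Cmult_neq_0; auto. apply Cmult_neq_0; auto. }
  assert (Hwz := Cmod_ge_0 (w - z)).
  apply (Rmult_le_reg_r (Cmod w * (Cmod z * Cmod z))). apply Rmult_lt_0_compat; [lra|nra].
  unfold Rdiv. rewrite Rmult_assoc, Rinv_l. 2: { apply Rgt_not_eq. apply Rmult_lt_0_compat; [lra|nra]. }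
  rewrite Rmult_1_r.
  assert (Hzz : (0 < Cmod z * Cmod z)%R) by nra.
  assert (eps * Cmod (w - z) * (Cmod z / 2 * (Cmod z * Cmod z)) <= eps * Cmod (w - z) * (Cmod w * (Cmod z * Cmod z)))%R.
  { apply Rmult_le_compat_l. nra. apply Rmult_le_compat_r; lra. }
  nra.
Qed.

Lemma Cmod_le_sum (u v : R) : (Cmod (u, v) <= Rabs u + Rabs v)%R.
Proof.
  unfold Cmod. simpl. rewrite <- (sqrt_Rsqr (Rabs u + Rabs v)).
  2: { pose proof (Rabs_pos u); pose proof (Rabs_pos v); lra. }
  apply sqrt_le_1_alt. unfold Rsqr.
  pose proof (Rabs_pos u); pose proof (Rabs_pos v).
  rewrite !Rmult_1_r.
  replace (u * u)%R with (Rabs u * Rabs u)%R by (rewrite <- Rabs_mult; apply Rabs_right; nra).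
  replace (v * v)%R with (Rabs v * Rabs v)%R by (rewrite <- Rabs_mult; apply Rabs_right; nra).
  nra.
Qed.

Lemma Cmod_fst (c : C) : (Rabs (fst c) <= Cmod c)%R.
Proof. pose proof (Rmax_Cmod c). pose proof (Rmax_l (Rabs (fst c)) (Rabs (snd c))). lra. Qed.
Lemma Cmod_snd (c : C) : (Rabs (snd c) <= Cmod c)%R.
Proof. pose proof (Rmax_Cmod c). pose proof (Rmax_r (Rabs (fst c)) (Rabs (snd c))). lra. Qed.

Lemma dpl_bound f x l : derivable_pt_lim f x l -> forall eps, (0 < eps)%R ->
  exists del, (0 < del)%R /\ forall h, (Rabs h < del)%R -> (Rabs (f (x + h) - f x - l * h) <= eps * Rabs h)%R.
Proof.
  intros H eps Heps. destruct (H eps Heps) as [d Hd]. exists d. split; [apply cond_pos|].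
  intros h Hh. destruct (Req_dec h 0) as [->|Hn].
  - rewrite Rplus_0_r, Rabs_R0. replace (f x - f x - l * 0)%R with 0%R by ring. rewrite Rabs_R0. lra.
  - specialize (Hd h Hn Hh).
    replace (f (x + h) - f x - l * h)%R with (((f (x + h) - f x) / h - l) * h)%R by (field; auto).
    rewrite Rabs_mult. apply Rmult_le_compat_r. apply Rabs_pos. lra.
Qed.

Lemma Cexp_add a b : Cexp (a + b) = Cexp a * Cexp b.
Proof.
  destruct a as [a1 a2], b as [b1 b2]. unfold Cexp, Cmult, Cplus. simpl.
  rewrite exp_plus, cos_plus, sin_plus. f_equal; ring.
Qed.

Lemma Cexp_0 : Cexp 0 = 1.
Proof. unfold Cexp, RtoC. simpl. rewrite exp_0, cos_0, sin_0. f_equal; ring. Qed.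

Lemma Cexp_neq0 a : Cexp a <> 0.
Proof.
  intro E. assert (E2 := f_equal Cmod E). rewrite Cmod_0 in E2.
  destruct a as [x y]. unfold Cexp, Cmod in E2. simpl in E2.
  apply sqrt_eq_0 in E2. 2: nra.
  pose proof (exp_pos x). pose proof (sin2_cos2 y). unfold Rsqr in *. nra.
Qed.

Lemma Dl_Cexp0 : Dl Cexp 0 1.
Proof.
  intros eps Heps.
  set (e := Rmin (eps / 8) 1). assert (He : (0 < e)%R) by (unfold e; apply Rmin_pos; lra).
  assert (He1 : (e <= 1)%R) by apply Rmin_r. assert (He8 : (e <= eps / 8)%R) by apply Rmin_l.
  clearbody e.
  destruct (dpl_bound _ _ _ (derivable_pt_lim_exp 0) e He) as [d1 [Hd1 B1]].
  destruct (dpl_bound _ _ _ (derivable_pt_lim_cos 0) e He) as [d2 [Hd2 B2]].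
  destruct (dpl_bound _ _ _ (derivable_pt_lim_sin 0) e He) as [d3 [Hd3 B3]].
  rewrite exp_0, sin_0, cos_0 in *.
  set (d := Rmin (Rmin d1 d2) (Rmin d3 (Rmin 1 e))).
  exists d. split. unfold d. repeat apply Rmin_pos; auto; lra.
  intros w Hw. replace (w - 0) with w in * by ring. rewrite Cexp_0.
  destruct w as [x y].
  assert (Hx := Cmod_fst (x, y)). assert (Hy := Cmod_snd (x, y)). simpl in Hx, Hy.
  assert (Hd1' : (Rabs x < d1)%R). { unfold d in Hw. pose proof (Rmin_l (Rmin d1 d2) (Rmin d3 (Rmin 1 e))). pose proof (Rmin_l d1 d2). lra. }
  assert (Hd2' : (Rabs y < d2)%R). { unfold d in Hw. pose proof (Rmin_l (Rmin d1 d2) (Rmin d3 (Rmin 1 e))). pose proof (Rmin_r d1 d2). lra. }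
  assert (Hd3' : (Rabs y < d3)%R). { unfold d in Hw. pose proof (Rmin_r (Rmin d1 d2) (Rmin d3 (Rmin 1 e))). pose proof (Rmin_l d3 (Rmin 1 e)). lra. }
  assert (Hd4 : (Cmod (x, y) < 1)%R /\ (Cmod (x, y) < e)%R).
  { unfold d in Hw. pose proof (Rmin_r (Rmin d1 d2) (Rmin d3 (Rmin 1 e))). pose proof (Rmin_r d3 (Rmin 1 e)).
    pose proof (Rmin_l 1 e). pose proof (Rmin_r 1 e). lra. }
  specialize (B1 x Hd1'). specialize (B2 y Hd2'). specialize (B3 y Hd3').
  rewrite !Rplus_0_l in B1, B2, B3.
  replace (Cexp (x, y) - 1 - (x, y) * 1) with
    (((exp x - 1 - x) * cos y + (1 + x) * (cos y - 1))%R, ((exp x - 1) * sin y + (sin y - y))%R).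
  2: { unfold Cexp, Cminus, Cplus, Copp, Cmult. simpl. f_equal; ring. }
  eapply Rle_trans. apply Cmod_le_sum.
  assert (Hc : (Rabs (cos y) <= 1)%R) by (apply Rabs_le; apply COS_bound).
  assert (Hs : (Rabs (sin y) <= Rabs y + e * Rabs y)%R).
  { replace (sin y) with ((sin y - 0 - 1 * y) + y)%R by ring.
    eapply Rle_trans. apply Rabs_triang. lra. }
  assert (Hex : (Rabs (exp x - 1) <= Rabs x + e * Rabs x)%R).
  { replace (exp x - 1)%R with ((exp x - 1 - 1 * x) + x)%R by ring.
    eapply Rle_trans. apply Rabs_triang. lra. }
  assert (R1 : (Rabs ((exp x - 1 - x) * cos y + (1 + x) * (cos y - 1)) <= e * Rabs x + 2 * (e * Rabs y))%R).
  { eapply Rle_trans. apply Rabs_triang. rewrite !Rabs_mult.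
    replace (exp x - 1 - x)%R with (exp x - 1 - 1 * x)%R by ring.
    replace (cos y - 1)%R with (cos y - 1 - -0 * y)%R by ring.
    assert (Rabs (1 + x) <= 2)%R.
    { eapply Rle_trans. apply Rabs_triang. rewrite Rabs_R1. lra. }
    pose proof (Rabs_pos (exp x - 1 - 1 * x)). pose proof (Rabs_pos (cos y - 1 - -0 * y)).
    pose proof (Rabs_pos (1 + x)). pose proof (Rabs_pos (cos y)).
    apply Rplus_le_compat; nra. }
  assert (R2 : (Rabs ((exp x - 1) * sin y + (sin y - y)) <= (Rabs x + e * Rabs x) * (Rabs y + e * Rabs y) + e * Rabs y)%R).
  { eapply Rle_trans. apply Rabs_triang. rewrite !Rabs_mult.
    replace (sin y - y)%R with (sin y - 0 - 1 * y)%R by ring.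
    pose proof (Rabs_pos (exp x - 1)). pose proof (Rabs_pos (sin y)).
    apply Rplus_le_compat; [|lra]. apply Rmult_le_compat; auto. }
  pose proof (Rabs_pos x). pose proof (Rabs_pos y).
  assert ((Rabs x + e * Rabs x) * (Rabs y + e * Rabs y) <= 4 * e * Cmod (x, y))%R.
  { destruct Hd4. assert (e * Rabs x <= Rabs x)%R by (apply Rmult_le_compat_r with (r := Rabs x) in He1; lra).
    assert (e * Rabs y <= Rabs y)%R by (apply Rmult_le_compat_r with (r := Rabs y) in He1; lra).
    assert (Rabs x + e * Rabs x <= 2 * e)%R by lra.
    assert (Rabs y + e * Rabs y <= 2 * Cmod (x,y))%R by lra.
    apply Rle_trans with ((2 * e) * (2 * Cmod (x, y)))%R; [|lra].
    assert (0 <= e * Rabs x)%R by (apply Rmult_le_pos; lra).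
    assert (0 <= e * Rabs y)%R by (apply Rmult_le_pos; lra).
    apply Rmult_le_compat; lra. }
  nra.
Qed.

Lemma Dl_Cexp z : Dl Cexp z (Cexp z).
Proof.
  intros eps Heps.
  assert (Hm : (0 < Cmod (Cexp z))%R) by (apply (proj1 (Cmod_gt_0 _)); apply Cexp_neq0).
  destruct (Dl_Cexp0 (eps / Cmod (Cexp z))%R ltac:(apply Rdiv_lt_0_compat; auto)) as [d [Hd H]].
  exists d; split; auto. intros w Hw.
  specialize (H (w - z)). replace (w - z - 0) with (w - z) in H by ring. specialize (H Hw).
  rewrite Cexp_0 in H.
  replace (Cexp w - Cexp z - (w - z) * Cexp z) with (Cexp z * (Cexp (w - z) - 1 - (w - z) * 1)).
  2: { assert (E : Cexp w = Cexp z * Cexp (w - z)) by (rewrite <- Cexp_add; f_equal; ring). rewrite E; ring. }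
  rewrite Cmod_mult.
  apply (Rmult_le_compat_l (Cmod (Cexp z))) in H; [|lra].
  eapply Rle_trans; [exact H|]. right. field. lra.
Qed.

Open Scope R_scope.
Open Scope R_scope.
Open Scope C_scope.

Definition Cc (F : C -> C) (w : C) : Prop :=
  forall eps, (0 < eps)%R -> exists del, (0 < del)%R /\ forall w',
    (Cmod (w' - w) < del)%R -> (Cmod (F w' - F w) < eps)%R.

Lemma Dl_Cc F w l : Dl F w l -> Cc F w.
Proof.
  intros H eps Heps. destruct (Dl_lip F w l H) as [d [Hd H']].
  assert (Hl : (0 < Cmod l + 1)%R) by (pose proof (Cmod_ge_0 l); lra).
  exists (Rmin d (eps / (Cmod l + 1))). split. apply Rmin_pos; auto. apply Rdiv_lt_0_compat; auto.
  intros w' Hw. eapply Rle_lt_trans. apply H'. eapply Rlt_le_trans; [exact Hw|apply Rmin_l].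
  apply Rlt_le_trans with ((Cmod l + 1) * (eps / (Cmod l + 1)))%R.
  apply Rmult_lt_compat_l; auto. eapply Rlt_le_trans; [exact Hw|apply Rmin_r].
  right. field. lra.
Qed.

Lemma Cc_scal c F w : Cc F w -> Cc (fun x => c * F x) w.
Proof.
  intros H eps Heps.
  assert (Hl : (0 < Cmod c + 1)%R) by (pose proof (Cmod_ge_0 c); lra).
  destruct (H (eps / (Cmod c + 1))%R ltac:(apply Rdiv_lt_0_compat; auto)) as [d [Hd H']].
  exists d; split; auto. intros w' Hw.
  replace (c * F w' - c * F w) with (c * (F w' - F w)) by ring. rewrite Cmod_mult.
  specialize (H' w' Hw). pose proof (Cmod_ge_0 c).
  apply Rle_lt_trans with ((Cmod c + 1) * Cmod (F w' - F w))%R.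
  pose proof (Cmod_ge_0 (F w' - F w)). nra.
  apply Rmult_lt_compat_l with (r := (Cmod c + 1)%R) in H'; auto. eapply Rlt_le_trans; [exact H'|]. right; field; lra.
Qed.

Lemma Cc_plus F G w : Cc F w -> Cc G w -> Cc (fun x => F x + G x) w.
Proof.
  intros H1 H2 eps Heps.
  destruct (H1 (eps/2)%R ltac:(lra)) as [d1 [Hd1 K1]].
  destruct (H2 (eps/2)%R ltac:(lra)) as [d2 [Hd2 K2]].
  exists (Rmin d1 d2); split. apply Rmin_pos; auto.
  intros w' Hw. replace (F w' + G w' - (F w + G w)) with ((F w' - F w) + (G w' - G w)) by ring.
  eapply Rle_lt_trans. apply Cmod_triangle.
  assert (A1 := K1 w' ltac:(eapply Rlt_le_trans; [exact Hw|apply Rmin_l])).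
  assert (A2 := K2 w' ltac:(eapply Rlt_le_trans; [exact Hw|apply Rmin_r])). lra.
Qed.

Lemma Cc_mult F G w : Cc F w -> Cc G w -> Cc (fun x => F x * G x) w.
Proof.
  intros H1 H2 eps Heps.
  set (M := (Cmod (F w) + Cmod (G w) + 1)%R).
  assert (HM : (0 < M)%R) by (unfold M; pose proof (Cmod_ge_0 (F w)); pose proof (Cmod_ge_0 (G w)); lra).
  set (e := Rmin 1 (eps / (3 * M))).
  assert (He : (0 < e)%R) by (unfold e; apply Rmin_pos; [lra|apply Rdiv_lt_0_compat; lra]).
  assert (He1 : (e <= 1)%R) by apply Rmin_l.
  assert (He2 : (e <= eps / (3 * M))%R) by apply Rmin_r.
  destruct (H1 e He) as [d1 [Hd1 K1]]. destruct (H2 e He) as [d2 [Hd2 K2]].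
  exists (Rmin d1 d2); split. apply Rmin_pos; auto.
  intros w' Hw.
  assert (A1 := K1 w' ltac:(eapply Rlt_le_trans; [exact Hw|apply Rmin_l])).
  assert (A2 := K2 w' ltac:(eapply Rlt_le_trans; [exact Hw|apply Rmin_r])).
  replace (F w' * G w' - F w * G w) with ((F w' - F w) * (G w' - G w) + (F w' - F w) * G w + F w * (G w' - G w)) by ring.
  eapply Rle_lt_trans. apply Cmod_triangle. eapply Rle_lt_trans. apply Rplus_le_compat_r. apply Cmod_triangle.
  rewrite !Cmod_mult.
  pose proof (Cmod_ge_0 (F w' - F w)). pose proof (Cmod_ge_0 (G w' - G w)).
  pose proof (Cmod_ge_0 (F w)). pose proof (Cmod_ge_0 (G w)).
  assert (e * M <= eps / 3)%R.
  { apply Rmult_le_compat_r with (r := M) in He2; [|lra].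
    replace (eps / (3 * M) * M)%R with (eps / 3)%R in He2 by (field; lra). exact He2. }
  assert (T1 : (Cmod (F w' - F w) * Cmod (G w' - G w) <= e * e)%R) by (apply Rmult_le_compat; lra).
  assert (T2 : (Cmod (F w' - F w) * Cmod (G w) <= e * Cmod (G w))%R) by (apply Rmult_le_compat_r; lra).
  assert (T3 : (Cmod (F w) * Cmod (G w' - G w) <= Cmod (F w) * e)%R) by (apply Rmult_le_compat_l; lra).
  assert (e * e <= e * 1)%R by (apply Rmult_le_compat_l; lra).
  unfold M in *. nra.
Qed.

Definition path (a b : C) (t : R) : C := a + RtoC t * (b - a).

Definition pint (F : C -> C) (a b : C) : C :=
  @RInt C_R_CompleteNormedModule (fun t => F (path a b t)) 0 1.

Definition seg (F : C -> C) (a b : C) : C := (b - a) * pint F a b.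

Definition CS (F : C -> C) (a b : C) : Prop := forall t, (0 <= t <= 1)%R -> Cc F (path a b t).

Lemma Cc_path_cont F a b t0 : Cc F (path a b t0) ->
  @continuous R_UniformSpace C_R_CompleteNormedModule (fun t => F (path a b t)) t0.
Proof.
  intros H. unfold continuous. apply (filterlim_locally (U := C_R_CompleteNormedModule)).
  intros eps. destruct (H eps (cond_pos eps)) as [d [Hd H']].
  assert (Hm : (0 < Cmod (b - a) + 1)%R) by (pose proof (Cmod_ge_0 (b - a)); lra).
  exists (mkposreal (d / (Cmod (b - a) + 1)) ltac:(apply Rdiv_lt_0_compat; auto)).
  intros t Ht. apply (norm_compat1 (V := C_R_NormedModule)).
  rewrite prod_norm_Cmod, minus_CR. apply H'.
  unfold path. replace (a + RtoC t * (b - a) - (a + RtoC t0 * (b - a))) with (RtoC (t - t0) * (b - a)).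
  2: { rewrite RtoC_minus. ring. }
  rewrite Cmod_mult, Cmod_R. simpl in Ht. unfold ball in Ht; simpl in Ht. unfold AbsRing_ball in Ht.
  unfold abs, minus, plus, opp in Ht; simpl in Ht.
  pose proof (Cmod_ge_0 (b - a)). pose proof (Rabs_pos (t - t0)).
  apply Rle_lt_trans with (Rabs (t - t0) * (Cmod (b - a) + 1))%R. nra.
  apply Rmult_lt_compat_r with (r := (Cmod (b - a) + 1)%R) in Ht; auto.
  replace (d / (Cmod (b - a) + 1) * (Cmod (b - a) + 1))%R with d in Ht by (field; lra).
  replace (t + - t0)%R with (t - t0)%R in Ht by ring. exact Ht.
Qed.

Lemma ex_pint F a b lo hi : CS F a b -> (0 <= lo <= 1)%R -> (0 <= hi <= 1)%R ->
  @ex_RInt C_R_CompleteNormedModule (fun t => F (path a b t)) lo hi.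
Proof.
  intros H Hlo Hhi. apply ex_RInt_continuous. intros z Hz.
  apply Cc_path_cont. apply H.
  split. eapply Rle_trans; [|apply Hz]. apply Rmin_case; lra.
  eapply Rle_trans; [apply Hz|]. apply Rmax_case; lra.
Qed.

Lemma is_RInt_R_lin (f g : R -> R) lo hi i j (p q : R) :
  is_RInt f lo hi i -> is_RInt g lo hi j ->
  is_RInt (fun t => p * f t + q * g t)%R lo hi (p * i + q * j)%R.
Proof.
  intros Hf Hg.
  exact (is_RInt_plus (V := R_NormedModule) _ _ lo hi _ _
           (is_RInt_scal (V := R_NormedModule) f lo hi p i Hf)
           (is_RInt_scal (V := R_NormedModule) g lo hi q j Hg)).
Qed.

Lemma is_RInt_C_fst (phi : R -> C) lo hi J :
  @is_RInt C_R_NormedModule phi lo hi J -> is_RInt (fun t => fst (phi t)) lo hi (fst J).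
Proof. intros H. exact (is_RInt_fct_extend_fst (U := R_NormedModule) (V := R_NormedModule) phi lo hi J H). Qed.

Lemma is_RInt_C_snd (phi : R -> C) lo hi J :
  @is_RInt C_R_NormedModule phi lo hi J -> is_RInt (fun t => snd (phi t)) lo hi (snd J).
Proof. intros H. exact (is_RInt_fct_extend_snd (U := R_NormedModule) (V := R_NormedModule) phi lo hi J H). Qed.

Lemma is_RInt_C_pair (phi : R -> C) lo hi (x y : R) :
  is_RInt (fun t => fst (phi t)) lo hi x -> is_RInt (fun t => snd (phi t)) lo hi y ->
  @is_RInt C_R_NormedModule phi lo hi (x, y).
Proof. intros H1 H2. exact (is_RInt_fct_extend_pair (U := R_NormedModule) (V := R_NormedModule) phi lo hi x y H1 H2). Qed.

Lemma is_RInt_Cmult (phi : R -> C) lo hi J c :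
  @is_RInt C_R_NormedModule phi lo hi J ->
  @is_RInt C_R_NormedModule (fun t => c * phi t) lo hi (c * J).
Proof.
  intros H. destruct c as [c1 c2].
  assert (H1 := is_RInt_C_fst _ _ _ _ H). assert (H2 := is_RInt_C_snd _ _ _ _ H).
  replace ((c1, c2) * J) with ((c1 * fst J - c2 * snd J)%R, (c1 * snd J + c2 * fst J)%R)
    by (destruct J; unfold Cmult; simpl; f_equal; ring).
  apply is_RInt_C_pair.
  - eapply is_RInt_ext. 2: { replace (c1 * fst J - c2 * snd J)%R with (c1 * fst J + (- c2) * snd J)%R by ring.
      apply is_RInt_R_lin; eauto. }
    intros t _. unfold Cmult. simpl. ring.
  - eapply is_RInt_ext. 2: { apply (is_RInt_R_lin _ _ lo hi _ _ c1 c2 H2 H1). }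
    intros t _. unfold Cmult. simpl. ring.
Qed.

Lemma is_RInt_Cplus (phi psi : R -> C) lo hi I J :
  @is_RInt C_R_NormedModule phi lo hi I -> @is_RInt C_R_NormedModule psi lo hi J ->
  @is_RInt C_R_NormedModule (fun t => phi t + psi t) lo hi (I + J).
Proof.
  intros H1 H2. rewrite <- plus_CR.
  eapply is_RInt_ext. 2: exact (is_RInt_plus (V := C_R_NormedModule) _ _ lo hi _ _ H1 H2).
  intros; apply plus_CR.
Qed.

Lemma pint_correct F a b : CS F a b ->
  @is_RInt C_R_NormedModule (fun t => F (path a b t)) 0 1 (pint F a b).
Proof. intros H. apply (RInt_correct (V := C_R_CompleteNormedModule)). apply ex_pint; auto; lra. Qed.

Lemma CS_plus F G a b : CS F a b -> CS G a b -> CS (fun w => F w + G w) a b.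
Proof. intros H1 H2 t Ht. apply Cc_plus; auto. Qed.
Lemma CS_mult F G a b : CS F a b -> CS G a b -> CS (fun w => F w * G w) a b.
Proof. intros H1 H2 t Ht. apply Cc_mult; auto. Qed.
Lemma CS_scal c F a b : CS F a b -> CS (fun w => c * F w) a b.
Proof. intros H1 t Ht. apply Cc_scal; auto. Qed.
Lemma Cc_const c w : Cc (fun _ => c) w.
Proof. intros eps Heps. exists 1%R. split. lra. intros. replace (c - c) with (RtoC 0) by ring. rewrite Cmod_0. auto. Qed.
Lemma CS_const c a b : CS (fun _ => c) a b.
Proof. intros t Ht. apply Cc_const. Qed.

Lemma seg_plus F G a b : CS F a b -> CS G a b ->
  seg (fun w => F w + G w) a b = seg F a b + seg G a b.
Proof.
  intros H1 H2. unfold seg.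
  replace (pint (fun w => F w + G w) a b) with (pint F a b + pint G a b). ring.
  symmetry. apply (is_RInt_unique (V := C_R_CompleteNormedModule)).
  apply (is_RInt_Cplus (fun t => F (path a b t)) (fun t => G (path a b t))); apply pint_correct; auto.
Qed.

Lemma seg_scal c F a b : CS F a b -> seg (fun w => c * F w) a b = c * seg F a b.
Proof.
  intros H. unfold seg.
  replace (pint (fun w => c * F w) a b) with (c * pint F a b). ring.
  symmetry. apply (is_RInt_unique (V := C_R_CompleteNormedModule)).
  apply (is_RInt_Cmult (fun t => F (path a b t))); apply pint_correct; auto.
Qed.

Lemma seg_const c a b : seg (fun _ => c) a b = (b - a) * c.
Proof.
  unfold seg, pint. f_equal.
  rewrite (is_RInt_unique (V := C_R_CompleteNormedModule) _ _ _ _ (is_RInt_const (V := C_R_NormedModule) 0 1 c)).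
  rewrite scal_CR. replace (1 - 0)%R with 1%R by ring. apply Cmult_1_l.
Qed.

Lemma seg_ext F G a b : (forall t, (0 <= t <= 1)%R -> F (path a b t) = G (path a b t)) ->
  seg F a b = seg G a b.
Proof.
  intros H. unfold seg, pint. f_equal. apply RInt_ext.
  intros x Hx. rewrite Rmin_left in Hx by lra. rewrite Rmax_right in Hx by lra. apply H; lra.
Qed.

Lemma seg_bound F a b M : CS F a b -> (forall t, (0 <= t <= 1)%R -> (Cmod (F (path a b t)) <= M)%R) ->
  (Cmod (seg F a b) <= Cmod (b - a) * M)%R.
Proof.
  intros H HM. unfold seg. rewrite Cmod_mult. apply Rmult_le_compat_l. apply Cmod_ge_0.
  assert (T := norm_RInt_le_const (V := C_R_NormedModule) (fun t => F (path a b t)) 0 1 (pint F a b) M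
    ltac:(lra) ltac:(intros; rewrite prod_norm_Cmod; apply HM; auto) (pint_correct F a b H)).
  rewrite prod_norm_Cmod in T. lra.
Qed.


Definition mid (a b : C) : C := (a + b) / 2.

Ltac ceq := unfold path, mid in *;
  repeat match goal with | c : C |- _ => destruct c end;
  unfold Cdiv, Cminus; unfold Cplus, Cmult, Copp, RtoC, Cinv; simpl; f_equal; field.

Lemma CS_sub F a b lo hi : CS F a b -> (0 <= lo <= 1)%R -> (0 <= hi <= 1)%R ->
  CS F (path a b lo) (path a b hi).
Proof.
  intros H Hl Hh t Ht. replace (path (path a b lo) (path a b hi) t) with (path a b (lo + t * (hi - lo))).
  apply H. split; nra. ceq.
Qed.

Lemma CS_rev F a b : CS F a b -> CS F b a.
Proof.
  intros H. replace b with (path a b 1) at 1 by ceq. replace a with (path a b 0) at 2 by ceq.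
  apply CS_sub; auto; lra.
Qed.

Lemma CS_mid1 F a b : CS F a b -> CS F a (mid a b).
Proof.
  intros H. replace a with (path a b 0) at 1 by ceq. replace (mid a b) with (path a b (1/2)) by ceq.
  apply CS_sub; auto; lra.
Qed.

Lemma CS_mid2 F a b : CS F a b -> CS F (mid a b) b.
Proof.
  intros H. replace b with (path a b 1) at 2 by ceq. replace (mid a b) with (path a b (1/2)) by ceq.
  apply CS_sub; auto; lra.
Qed.

Lemma seg_rev F a b : CS F a b -> seg F b a = - seg F a b.
Proof.
  intros H. assert (Hab := pint_correct F a b H).
  assert (T := is_RInt_swap (V := C_R_NormedModule) _ _ _ _ Hab).
  assert (T2 : @is_RInt C_R_NormedModule (fun t => F (path a b t)) ((-1) * 0 + 1) ((-1) * 1 + 1) (opp (pint F a b))).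
  { replace ((-1) * 0 + 1)%R with 1%R by ring. replace ((-1) * 1 + 1)%R with 0%R by ring. exact T. }
  apply is_RInt_comp_lin in T2.
  apply (is_RInt_Cmult _ _ _ _ (RtoC (-1))) in T2.
  unfold seg. replace (pint F b a) with (pint F a b). ring.
  symmetry. apply (is_RInt_unique (V := C_R_CompleteNormedModule)).
  assert (E : RtoC (-1) * (- pint F a b) = pint F a b) by (destruct (pint F a b); unfold Cmult, Copp, RtoC; simpl; f_equal; ring).
  rewrite <- E.
  eapply is_RInt_ext. 2: exact T2.
  intros t _. simpl. rewrite scal_CR. replace (path a b (-1 * t + 1)) with (path b a t) by ceq.
  rewrite Cmult_assoc, <- RtoC_mult. replace (-1 * -1)%R with 1%R by ring. apply Cmult_1_l.
Qed.

Lemma seg_mid F a b : CS F a b -> seg F a b = seg F a (mid a b) + seg F (mid a b) b.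
Proof.
  intros H.
  assert (E1 := RInt_correct (V := C_R_CompleteNormedModule) _ 0 (1/2) (ex_pint F a b 0 (1/2) H ltac:(lra) ltac:(lra))).
  assert (E2 := RInt_correct (V := C_R_CompleteNormedModule) _ (1/2) 1 (ex_pint F a b (1/2) 1 H ltac:(lra) ltac:(lra))).
  set (J1 := @RInt C_R_CompleteNormedModule (fun t => F (path a b t)) 0 (1/2)) in *.
  set (J2 := @RInt C_R_CompleteNormedModule (fun t => F (path a b t)) (1/2) 1) in *.
  assert (P : pint F a b = J1 + J2).
  { apply (is_RInt_unique (V := C_R_CompleteNormedModule)). rewrite <- plus_CR.
    exact (is_RInt_Chasles (V := C_R_NormedModule) _ _ _ _ _ _ E1 E2). }
  assert (P1 : pint F a (mid a b) = 2 * J1).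
  { apply (is_RInt_unique (V := C_R_CompleteNormedModule)).
    assert (T : @is_RInt C_R_NormedModule (fun t => F (path a b t)) ((1/2) * 0 + 0) ((1/2) * 1 + 0) J1).
    { replace ((1/2) * 0 + 0)%R with 0%R by ring. replace ((1/2) * 1 + 0)%R with (1/2)%R by ring. exact E1. }
    apply is_RInt_comp_lin in T. apply (is_RInt_Cmult _ _ _ _ 2) in T.
    eapply is_RInt_ext. 2: exact T.
    intros t _. simpl. rewrite scal_CR. replace (path a b (1 / 2 * t + 0)) with (path a (mid a b) t) by ceq.
    rewrite Cmult_assoc, <- RtoC_mult. replace (2 * (1/2))%R with 1%R by field. apply Cmult_1_l. }
  assert (P2 : pint F (mid a b) b = 2 * J2).
  { apply (is_RInt_unique (V := C_R_CompleteNormedModule)).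
    assert (T : @is_RInt C_R_NormedModule (fun t => F (path a b t)) ((1/2) * 0 + 1/2) ((1/2) * 1 + 1/2) J2).
    { replace ((1/2) * 0 + 1/2)%R with (1/2)%R by ring. replace ((1/2) * 1 + 1/2)%R with 1%R by field. exact E2. }
    apply is_RInt_comp_lin in T. apply (is_RInt_Cmult _ _ _ _ 2) in T.
    eapply is_RInt_ext. 2: exact T.
    intros t _. simpl. rewrite scal_CR. replace (path a b (1 / 2 * t + 1/2)) with (path (mid a b) b t) by ceq.
    rewrite Cmult_assoc, <- RtoC_mult. replace (2 * (1/2))%R with 1%R by field. apply Cmult_1_l. }
  unfold seg. rewrite P, P1, P2. unfold mid. field.
Qed.

Lemma chain_path G a b t0 l : Dl G (path a b t0) l ->
  DlR (fun t => G (path a b t)) t0 ((b - a) * l).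
Proof.
  intros H eps Heps.
  assert (Hm : (0 < Cmod (b - a) + 1)%R) by (pose proof (Cmod_ge_0 (b - a)); lra).
  destruct (H (eps / (Cmod (b - a) + 1))%R ltac:(apply Rdiv_lt_0_compat; auto)) as [d [Hd H']].
  exists (d / (Cmod (b - a) + 1))%R. split. apply Rdiv_lt_0_compat; auto.
  intros t Ht.
  assert (Ew : path a b t - path a b t0 = RtoC (t - t0) * (b - a)) by ceq.
  specialize (H' (path a b t)). rewrite Ew in H'.
  rewrite Cmod_mult, Cmod_R in H'.
  pose proof (Cmod_ge_0 (b - a)). pose proof (Rabs_pos (t - t0)).
  assert (Hlt : (Rabs (t - t0) * Cmod (b - a) < d)%R).
  { apply Rle_lt_trans with (Rabs (t - t0) * (Cmod (b - a) + 1))%R. nra.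
    apply Rmult_lt_compat_r with (r := (Cmod (b - a) + 1)%R) in Ht; auto.
    replace (d / (Cmod (b - a) + 1) * (Cmod (b - a) + 1))%R with d in Ht by (field; lra). exact Ht. }
  specialize (H' Hlt).
  replace (G (path a b t) - G (path a b t0) - RtoC (t - t0) * ((b - a) * l))
    with (G (path a b t) - G (path a b t0) - RtoC (t - t0) * (b - a) * l) by ring.
  eapply Rle_trans; [exact H'|].
  replace (eps / (Cmod (b - a) + 1) * (Rabs (t - t0) * Cmod (b - a)))%R
    with (eps * Rabs (t - t0) * (Cmod (b - a) / (Cmod (b - a) + 1)))%R by (field; lra).
  assert (Cmod (b - a) / (Cmod (b - a) + 1) <= 1)%R.
  { apply (Rmult_le_reg_r (Cmod (b - a) + 1)); auto. unfold Rdiv. rewrite Rmult_assoc, Rinv_l; lra. }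
  assert (0 <= eps * Rabs (t - t0))%R by nra. nra.
Qed.

Lemma seg_ftc G G' a b : (forall t, (0 <= t <= 1)%R -> Dl G (path a b t) (G' (path a b t))) ->
  CS G' a b -> seg G' a b = G b - G a.
Proof.
  intros HD HC.
  assert (T := is_RInt_derive (V := C_R_CompleteNormedModule) (fun t => G (path a b t))
     (fun t => (b - a) * G' (path a b t)) 0 1).
  rewrite Rmin_left, Rmax_right in T by lra.
  assert (T2 : @is_RInt C_R_NormedModule (fun t => (b - a) * G' (path a b t)) 0 1 (G b - G a)).
  { replace (G b - G a) with (@minus C_R_NormedModule (G (path a b 1)) (G (path a b 0))).
    apply T.
    - intros x Hx. apply is_derive_DlR. apply chain_path. apply HD; auto.
    - intros x Hx. apply (Cc_path_cont (fun w => (b - a) * G' w)). apply Cc_scal. apply HC; auto.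
    - rewrite minus_CR. f_equal; f_equal; ceq. }
  unfold seg. symmetry. apply (is_RInt_unique (V := C_R_CompleteNormedModule)) in T2. rewrite <- T2.
  apply (is_RInt_unique (V := C_R_CompleteNormedModule)).
  apply (is_RInt_Cmult (fun t => G' (path a b t))). apply pint_correct; auto.
Qed.

Lemma Cc_id w : Cc (fun x => x) w.
Proof. intros eps Heps. exists eps. split; auto. Qed.

Lemma seg_id a b : seg (fun w => w) a b = (b * b - a * a) / 2.
Proof.
  replace ((b * b - a * a) / 2) with ((fun w => w * w / 2) b - (fun w => w * w / 2) a) by (simpl; field).
  apply (seg_ftc (fun w => w * w / 2)).
  - intros t _. set (p := path a b t).
    apply (Dl_eq _ _ ((1 * p + p * 1) * / 2)).
    apply (Dl_ext (fun w => (w * w) * / 2)). 2: intros; reflexivity.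
    apply (Dl_eq _ _ (((1 * p + p * 1) * (/ 2)) + (p * p) * 0)).
    apply (Dl_mult (fun w => w * w) (fun _ => / 2)). apply Dl_mult; apply Dl_id. apply Dl_const.
    ring. field.
  - intros t _. apply Cc_id.
Qed.

Open Scope R_scope.
Open Scope R_scope.
Open Scope C_scope.

Definition tri (F : C -> C) (a b c : C) : C := seg F a b + seg F b c + seg F c a.

Definition Psi (a0 b0 c0 : C) (u : R * R) : C :=
  a0 + RtoC (fst u) * (b0 - a0) + RtoC (snd u) * (c0 - a0).

Definition inS (u : R * R) : Prop := (0 <= fst u /\ 0 <= snd u /\ fst u + snd u <= 1)%R.

Definition pmid (u v : R * R) : R * R := ((fst u + fst v) / 2, (snd u + snd v) / 2)%R.
Definition ucomb (u v : R * R) (t : R) : R * R :=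
  (fst u + t * (fst v - fst u), snd u + t * (snd v - snd u))%R.

Lemma inS_comb u v t : inS u -> inS v -> (0 <= t <= 1)%R -> inS (ucomb u v t).
Proof.
  destruct u as [u1 u2], v as [v1 v2]. unfold inS, ucomb. simpl. intros H1 H2 Ht. nra.
Qed.

Lemma inS_pmid u v : inS u -> inS v -> inS (pmid u v).
Proof.
  destruct u as [u1 u2], v as [v1 v2]. unfold inS, pmid. simpl. intros H1 H2. lra.
Qed.

Lemma Psi_path a0 b0 c0 u v t : path (Psi a0 b0 c0 u) (Psi a0 b0 c0 v) t = Psi a0 b0 c0 (ucomb u v t).
Proof. destruct u, v. unfold Psi, ucomb. simpl. ceq. Qed.

Lemma Psi_mid a0 b0 c0 u v : Psi a0 b0 c0 (pmid u v) = mid (Psi a0 b0 c0 u) (Psi a0 b0 c0 v).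
Proof. destruct u, v. unfold Psi, pmid. simpl. ceq. Qed.

Lemma Psi_diff a0 b0 c0 u v :
  (Cmod (Psi a0 b0 c0 u - Psi a0 b0 c0 v) <=
   Rabs (fst u - fst v) * Cmod (b0 - a0) + Rabs (snd u - snd v) * Cmod (c0 - a0))%R.
Proof.
  replace (Psi a0 b0 c0 u - Psi a0 b0 c0 v) with
    (RtoC (fst u - fst v) * (b0 - a0) + RtoC (snd u - snd v) * (c0 - a0)).
  2: { unfold Psi. rewrite !RtoC_minus. ring. }
  eapply Rle_trans. apply Cmod_triangle. rewrite !Cmod_mult, !Cmod_R. lra.
Qed.

Definition GHyp (a0 b0 c0 : C) (F : C -> C) : Prop :=
  forall u, inS u -> exists l, Dl F (Psi a0 b0 c0 u) l.

Lemma GHyp_Cc a0 b0 c0 F : GHyp a0 b0 c0 F -> forall u, inS u -> Cc F (Psi a0 b0 c0 u).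
Proof. intros H u Hu. destruct (H u Hu) as [l Hl]. eapply Dl_Cc; eauto. Qed.

Definition GC (a0 b0 c0 : C) (F : C -> C) : Prop :=
  forall u, inS u -> Cc F (Psi a0 b0 c0 u).

Lemma GHyp_GC a0 b0 c0 F : GHyp a0 b0 c0 F -> GC a0 b0 c0 F.
Proof. intros H u Hu. apply GHyp_Cc; auto. Qed.

Lemma GC_CS a0 b0 c0 F u v : GC a0 b0 c0 F -> inS u -> inS v ->
  CS F (Psi a0 b0 c0 u) (Psi a0 b0 c0 v).
Proof.
  intros H Hu Hv t Ht. rewrite Psi_path. apply H. apply inS_comb; auto.
Qed.

Lemma GHyp_CS a0 b0 c0 F u v : GHyp a0 b0 c0 F -> inS u -> inS v ->
  CS F (Psi a0 b0 c0 u) (Psi a0 b0 c0 v).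
Proof. intros H. apply GC_CS. apply GHyp_GC; auto. Qed.

Record ptri := mkT { tp : R * R; tq : R * R; tr : R * R }.

Definition triP a0 b0 c0 F (T : ptri) : C :=
  tri F (Psi a0 b0 c0 (tp T)) (Psi a0 b0 c0 (tq T)) (Psi a0 b0 c0 (tr T)).

Definition sub1 T := mkT (tp T) (pmid (tp T) (tq T)) (pmid (tr T) (tp T)).
Definition sub2 T := mkT (pmid (tp T) (tq T)) (tq T) (pmid (tq T) (tr T)).
Definition sub3 T := mkT (pmid (tr T) (tp T)) (pmid (tq T) (tr T)) (tr T).
Definition sub4 T := mkT (pmid (tp T) (tq T)) (pmid (tq T) (tr T)) (pmid (tr T) (tp T)).

Definition inST (T : ptri) : Prop := inS (tp T) /\ inS (tq T) /\ inS (tr T).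

Lemma subdiv a0 b0 c0 F T : GC a0 b0 c0 F -> inST T ->
  triP a0 b0 c0 F T = triP a0 b0 c0 F (sub1 T) + triP a0 b0 c0 F (sub2 T)
                      + triP a0 b0 c0 F (sub3 T) + triP a0 b0 c0 F (sub4 T).
Proof.
  intros H [Hp [Hq Hr]]. destruct T as [p q r]. simpl in *.
  unfold triP, sub1, sub2, sub3, sub4, tri. simpl.
  assert (Hpq := inS_pmid _ _ Hp Hq). assert (Hqr := inS_pmid _ _ Hq Hr). assert (Hrp := inS_pmid _ _ Hr Hp).
  rewrite !Psi_mid.
  set (A := Psi a0 b0 c0 p). set (B := Psi a0 b0 c0 q). set (Cc := Psi a0 b0 c0 r).
  assert (CAB : CS F A B) by (apply GC_CS; auto).
  assert (CBC : CS F B Cc) by (apply GC_CS; auto).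
  assert (CCA : CS F Cc A) by (apply GC_CS; auto).
  assert (C1 : CS F (mid A B) (mid Cc A)) by (unfold A, B, Cc; rewrite <- !Psi_mid; apply GC_CS; auto).
  assert (C2 : CS F (mid A B) (mid B Cc)) by (unfold A, B, Cc; rewrite <- !Psi_mid; apply GC_CS; auto).
  assert (C3 : CS F (mid Cc A) (mid B Cc)) by (unfold A, B, Cc; rewrite <- !Psi_mid; apply GC_CS; auto).
  rewrite (seg_mid F A B CAB), (seg_mid F B Cc CBC), (seg_mid F Cc A CCA).
  rewrite (seg_rev F _ _ C1), (seg_rev F _ _ C2), (seg_rev F _ _ C3).
  ring.
Qed.

Open Scope R_scope.
Open Scope R_scope.

Definition best2 {T} (val : T -> R) (x y : T) : T := if Rle_dec (val x) (val y) then y else x.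
Definition best4 {T} (val : T -> R) (x1 x2 x3 x4 : T) : T := best2 val (best2 val x1 x2) (best2 val x3 x4).

Lemma best2_ge {T} (val : T -> R) x y : val x <= val (best2 val x y) /\ val y <= val (best2 val x y).
Proof. unfold best2. destruct (Rle_dec (val x) (val y)); lra. Qed.

Lemma best2_in {T} (val : T -> R) x y : best2 val x y = x \/ best2 val x y = y.
Proof. unfold best2. destruct (Rle_dec (val x) (val y)); auto. Qed.

Lemma best4_ge {T} (val : T -> R) x1 x2 x3 x4 :
  val x1 <= val (best4 val x1 x2 x3 x4) /\ val x2 <= val (best4 val x1 x2 x3 x4) /\
  val x3 <= val (best4 val x1 x2 x3 x4) /\ val x4 <= val (best4 val x1 x2 x3 x4).
Proof.
  unfold best4. destruct (best2_ge val x1 x2), (best2_ge val x3 x4),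
    (best2_ge val (best2 val x1 x2) (best2 val x3 x4)). lra.
Qed.

Lemma best4_in {T} (val : T -> R) x1 x2 x3 x4 (P : T -> Prop) :
  P x1 -> P x2 -> P x3 -> P x4 -> P (best4 val x1 x2 x3 x4).
Proof.
  intros. unfold best4. destruct (best2_in val (best2 val x1 x2) (best2 val x3 x4)) as [E|E]; rewrite E;
  [destruct (best2_in val x1 x2) as [E'|E'] | destruct (best2_in val x3 x4) as [E'|E']]; rewrite E'; auto.
Qed.

Definition step a0 b0 c0 F (T : ptri) : ptri :=
  best4 (fun T => Cmod (triP a0 b0 c0 F T)) (sub1 T) (sub2 T) (sub3 T) (sub4 T).

Lemma step_bound a0 b0 c0 F T : GHyp a0 b0 c0 F -> inST T ->
  Cmod (triP a0 b0 c0 F T) <= 4 * Cmod (triP a0 b0 c0 F (step a0 b0 c0 F T)).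
Proof.
  intros H HT. rewrite (subdiv a0 b0 c0 F T (GHyp_GC _ _ _ _ H) HT).
  destruct (best4_ge (fun T => Cmod (triP a0 b0 c0 F T)) (sub1 T) (sub2 T) (sub3 T) (sub4 T)) as [B1 [B2 [B3 B4]]].
  unfold step. simpl in *.
  eapply Rle_trans. apply Cmod_triangle. eapply Rle_trans. apply Rplus_le_compat_r. apply Cmod_triangle.
  eapply Rle_trans. apply Rplus_le_compat_r. apply Rplus_le_compat_r. apply Cmod_triangle. lra.
Qed.

Lemma step_inST a0 b0 c0 F T : inST T -> inST (step a0 b0 c0 F T).
Proof.
  intros [Hp [Hq Hr]]. unfold step. apply best4_in; unfold inST, sub1, sub2, sub3, sub4; simpl;
  (split; [|split]); first [assumption | apply inS_pmid; assumption].
Qed.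

Definition pclose (u v : R * R) (s : R) : Prop :=
  (- s <= fst u - fst v <= s /\ - s <= snd u - snd v <= s)%R.

Definition psize (T : ptri) (s : R) : Prop :=
  pclose (tp T) (tq T) s /\ pclose (tq T) (tr T) s /\ pclose (tr T) (tp T) s.

Lemma step_psize a0 b0 c0 F T s : psize T s ->
  psize (step a0 b0 c0 F T) (s / 2) /\ pclose (tp (step a0 b0 c0 F T)) (tp T) (s / 2).
Proof.
  destruct T as [[p1 p2] [q1 q2] [r1 r2]]. unfold psize, pclose. simpl. intros H.
  unfold step. apply (best4_in _ _ _ _ _ (fun T' => psize T' (s/2) /\ pclose (tp T') (p1, p2) (s/2)));
  unfold psize, pclose, sub1, sub2, sub3, sub4, pmid; simpl; lra.
Qed.

Definition T0 : ptri := mkT (0, 0) (1, 0) (0, 1).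

Fixpoint Tseq a0 b0 c0 F (n : nat) : ptri :=
  match n with O => T0 | S n => step a0 b0 c0 F (Tseq a0 b0 c0 F n) end.

Lemma Tseq_inv a0 b0 c0 F n : GHyp a0 b0 c0 F ->
  inST (Tseq a0 b0 c0 F n) /\ psize (Tseq a0 b0 c0 F n) ((/2) ^ n) /\
  Cmod (triP a0 b0 c0 F T0) <= 4 ^ n * Cmod (triP a0 b0 c0 F (Tseq a0 b0 c0 F n)).
Proof.
  intros H. induction n as [|n [I1 [I2 I3]]].
  - simpl. split; [|split].
    + unfold inST, inS, T0; simpl; lra.
    + unfold psize, pclose, T0; simpl; lra.
    + lra.
  - simpl. split; [|split].
    + apply step_inST; auto.
    + destruct (step_psize a0 b0 c0 F _ _ I2) as [P _]. replace (/ 2 * (/ 2) ^ n) with ((/ 2) ^ n / 2) by field. exact P.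
    + assert (B := step_bound a0 b0 c0 F _ H I1). 
      assert (0 <= 4 ^ n) by (apply pow_le; lra). nra.
Qed.

Lemma Tseq_move a0 b0 c0 F n m : GHyp a0 b0 c0 F -> (n <= m)%nat ->
  pclose (tp (Tseq a0 b0 c0 F m)) (tp (Tseq a0 b0 c0 F n)) ((/2) ^ n - (/2) ^ m).
Proof.
  intros H Hnm. induction Hnm.
  - unfold pclose. lra.
  - destruct (Tseq_inv a0 b0 c0 F m H) as [_ [I2 _]].
    destruct (step_psize a0 b0 c0 F _ _ I2) as [_ P]. simpl.
    unfold pclose in *. simpl pow. 
    replace (/ 2 * (/ 2) ^ m) with ((/ 2) ^ m / 2) by field. lra.
Qed.

Lemma small_pow eps : 0 < eps -> exists n, (/2) ^ n < eps.
Proof.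
  intros H. destruct (pow_lt_1_zero (/2) ltac:(rewrite Rabs_right; lra) eps H) as [N HN].
  exists N. specialize (HN N (le_n N)). rewrite Rabs_right in HN; auto.
  apply Rle_ge, pow_le. lra.
Qed.

Lemma pow_half_pos n : 0 < (/2) ^ n.
Proof. apply pow_lt. lra. Qed.

Lemma pow_half_le n m : (n <= m)%nat -> (/2) ^ m <= (/2) ^ n.
Proof.
  intros H. induction H. lra. simpl. pose proof (pow_half_pos m). lra.
Qed.

Lemma seq_limit (x : nat -> R) : (forall n m, (n <= m)%nat -> Rabs (x m - x n) <= (/2) ^ n) ->
  exists a, forall n, Rabs (a - x n) <= (/2) ^ n.
Proof.
  intros H.
  assert (Hc : Cauchy_crit x).
  { intros eps Heps. destruct (small_pow eps Heps) as [N HN]. exists N. intros n m Hn Hm.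
    unfold Rdist. destruct (Nat.le_ge_cases n m) as [E|E].
    - rewrite Rabs_minus_sym. eapply Rle_lt_trans. apply H; auto. eapply Rle_lt_trans; [|exact HN]. apply pow_half_le; lia.
    - eapply Rle_lt_trans. apply H; auto. eapply Rle_lt_trans; [|exact HN]. apply pow_half_le; lia. }
  destruct (Stdlib.Reals.Rcomplete.R_complete x Hc) as [a Ha]. exists a. intros n.
  apply Rle_plus_epsilon. intros eps Heps. destruct (Ha eps Heps) as [N HN].
  set (m := Nat.max n N). specialize (HN m ltac:(unfold m; lia)). unfold Rdist in HN.
  specialize (H n m ltac:(unfold m; lia)).
  replace (a - x n) with ((x m - x n) - (x m - a)) by ring.
  eapply Rle_trans. apply Rabs_triang. rewrite Rabs_Ropp. lra.
Qed.

Lemma le_of_pow (c : R) : (forall n, c <= (/2) ^ n) -> c <= 0.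
Proof.
  intros H. apply Rle_plus_epsilon. intros eps Heps. destruct (small_pow eps Heps) as [n Hn].
  specialize (H n). lra.
Qed.

Open Scope C_scope.

Lemma Cc_ext F G w : Cc F w -> (forall x, G x = F x) -> Cc G w.
Proof. intros H E eps Heps. destruct (H eps Heps) as [d [Hd H']]. exists d; split; auto. intros; rewrite !E; auto. Qed.

Lemma Cc_lin F k l w : Cc F w -> Cc (fun x => F x - k - l * x) w.
Proof.
  intros H. apply (Cc_ext (fun x => F x + (- k + (- l) * x))).
  apply Cc_plus; auto. apply Cc_plus. apply Cc_const. apply Cc_scal. apply Cc_id.
  intros; ring.
Qed.

Lemma CS_lin F k l a b : CS F a b -> CS (fun x => F x - k - l * x) a b.
Proof. intros H t Ht. apply Cc_lin; auto. Qed.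

Lemma seg_lin F k l a b : CS F a b ->
  seg (fun w => F w - k - l * w) a b = seg F a b + ((b - a) * (- k) + (- l) * ((b * b - a * a) / 2)).
Proof.
  intros H.
  rewrite (seg_ext (fun w => F w - k - l * w) (fun w => F w + (- k + (- l) * w))) by (intros; ring).
  rewrite seg_plus; auto.
  2: { intros t _. apply Cc_plus. apply Cc_const. apply Cc_scal. apply Cc_id. }
  rewrite seg_plus. 2: apply CS_const. 2: { intros t _. apply Cc_scal. apply Cc_id. }
  rewrite seg_const, seg_scal, seg_id. reflexivity. intros t _; apply Cc_id.
Qed.

Lemma tri_lin F k l a b c : CS F a b -> CS F b c -> CS F c a ->
  tri F a b c = tri (fun w => F w - k - l * w) a b c.
Proof.
  intros H1 H2 H3. unfold tri. rewrite !seg_lin; auto. field.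
Qed.

Lemma pclose_comb u v c s t : pclose u c s -> pclose v c s -> (0 <= t <= 1)%R -> pclose (ucomb u v t) c s.
Proof.
  destruct u as [u1 u2], v as [v1 v2], c as [c1 c2]. unfold pclose, ucomb. simpl. intros H1 H2 Ht. nra.
Qed.

Lemma pclose_trans u v w s1 s2 : pclose u v s1 -> pclose v w s2 -> pclose u w (s1 + s2).
Proof. unfold pclose. intros. lra. Qed.

Lemma pclose_sym u v s : pclose u v s -> pclose v u s.
Proof. unfold pclose. intros. lra. Qed.

Lemma pclose_refl u s : (0 <= s)%R -> pclose u u s.
Proof. unfold pclose. intros. lra. Qed.

Lemma pclose_Psi a0 b0 c0 u v s : pclose u v s ->
  (Cmod (Psi a0 b0 c0 u - Psi a0 b0 c0 v) <= s * (Cmod (b0 - a0) + Cmod (c0 - a0)))%R.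
Proof.
  intros [H1 H2]. eapply Rle_trans. apply Psi_diff.
  pose proof (Cmod_ge_0 (b0 - a0)). pose proof (Cmod_ge_0 (c0 - a0)).
  assert (Rabs (fst u - fst v) <= s)%R by (apply Rabs_le; lra).
  assert (Rabs (snd u - snd v) <= s)%R by (apply Rabs_le; lra).
  assert (Rabs (fst u - fst v) * Cmod (b0 - a0) <= s * Cmod (b0 - a0))%R by (apply Rmult_le_compat_r; auto).
  assert (Rabs (snd u - snd v) * Cmod (c0 - a0) <= s * Cmod (c0 - a0))%R by (apply Rmult_le_compat_r; auto).
  lra.
Qed.

Theorem goursat a0 b0 c0 F : GHyp a0 b0 c0 F -> tri F a0 b0 c0 = 0.
Proof.
  intros H.
  assert (E0 : triP a0 b0 c0 F T0 = tri F a0 b0 c0).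
  { unfold triP, T0. simpl.
    replace (Psi a0 b0 c0 (0%R, 0%R)) with a0 by (unfold Psi; simpl; ceq).
    replace (Psi a0 b0 c0 (1%R, 0%R)) with b0 by (unfold Psi; simpl; ceq).
    replace (Psi a0 b0 c0 (0%R, 1%R)) with c0 by (unfold Psi; simpl; ceq). reflexivity. }
  set (T := Tseq a0 b0 c0 F) in *.
  destruct (seq_limit (fun n => fst (tp (T n)))) as [al Hal].
  { intros n m Hnm. destruct (Tseq_move a0 b0 c0 F n m H Hnm) as [[A1 A2] _].
    apply Rabs_le. pose proof (pow_half_pos m). fold T in A1, A2. lra. }
  destruct (seq_limit (fun n => snd (tp (T n)))) as [be Hbe].
  { intros n m Hnm. destruct (Tseq_move a0 b0 c0 F n m H Hnm) as [_ [A1 A2]].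
    apply Rabs_le. pose proof (pow_half_pos m). fold T in A1, A2. lra. }
  set (pa := (al, be)).
  assert (Hclose : forall n, pclose (tp (T n)) pa ((/2) ^ n)).
  { intros n. specialize (Hal n). specialize (Hbe n). apply Rabs_le_between in Hal, Hbe.
    unfold pclose, pa. simpl. lra. }
  assert (Hin : inS pa).
  { unfold inS, pa. simpl. split; [|split].
    - assert (-al <= 0)%R; [|lra]. apply le_of_pow. intros n.
      destruct (Tseq_inv a0 b0 c0 F n H) as [[[X1 [X2 X3]] _] _]. specialize (Hclose n).
      unfold pclose in Hclose. simpl in Hclose. fold T in X1. lra.
    - assert (-be <= 0)%R; [|lra]. apply le_of_pow. intros n.
      destruct (Tseq_inv a0 b0 c0 F n H) as [[[X1 [X2 X3]] _] _]. specialize (Hclose n).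
      unfold pclose in Hclose. simpl in Hclose. fold T in X2. lra.
    - assert ((al + be - 1) / 2 <= 0)%R; [|lra]. apply le_of_pow. intros n.
      destruct (Tseq_inv a0 b0 c0 F n H) as [[[X1 [X2 X3]] _] _]. specialize (Hclose n).
      unfold pclose in Hclose. simpl in Hclose. fold T in X3. lra. }
  destruct (H pa Hin) as [l Hl]. set (p := Psi a0 b0 c0 pa) in *.
  set (S := (Cmod (b0 - a0) + Cmod (c0 - a0))%R).
  assert (HS : (0 <= S)%R) by (unfold S; pose proof (Cmod_ge_0 (b0 - a0)); pose proof (Cmod_ge_0 (c0 - a0)); lra).
  assert (Main : forall eps, (0 < eps)%R -> (Cmod (tri F a0 b0 c0) <= 6 * eps * (S * S))%R).
  { intros eps Heps. destruct (Hl eps Heps) as [del [Hdel Hd]].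
    destruct (small_pow (del / (2 * S + 1))%R ltac:(apply Rdiv_lt_0_compat; lra)) as [n Hn].
    set (s := ((/2) ^ n)%R) in *. assert (Hs : (0 < s)%R) by apply pow_half_pos.
    assert (H2s : (2 * s * S < del)%R).
    { apply Rmult_lt_compat_r with (r := (2 * S + 1)%R) in Hn; [|lra].
      replace (del / (2 * S + 1) * (2 * S + 1))%R with del in Hn by (field; lra). nra. }
    destruct (Tseq_inv a0 b0 c0 F n H) as [[Iu [Iv Iw]] [[P1 [P2 P3]] I3]]. fold T in Iu, Iv, Iw, P1, P2, P3, I3.
    set (u1 := tp (T n)) in *. set (u2 := tq (T n)) in *. set (u3 := tr (T n)) in *.
    assert (Cl : forall u, pclose u u1 s -> pclose u pa (s + s)).
    { intros u Hu. eapply pclose_trans. exact Hu. apply Hclose. }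
    assert (C1 : pclose u1 u1 s) by (apply pclose_refl; lra).
    assert (C2 : pclose u2 u1 s) by (apply pclose_sym; auto).
    assert (C3 : pclose u3 u1 s) by auto.
    set (R := fun w => F w - (F p - p * l) - l * w).
    assert (EB : forall u v, inS u -> inS v -> pclose u u1 s -> pclose v u1 s -> pclose u v s ->
      (Cmod (seg R (Psi a0 b0 c0 u) (Psi a0 b0 c0 v)) <= s * S * (eps * (2 * s * S)))%R).
    { intros u v Hu Hv Hu1 Hv1 Huv.
      assert (Huv' := pclose_Psi a0 b0 c0 _ _ _ (pclose_sym _ _ _ Huv)). fold S in Huv'.
      eapply Rle_trans. apply (seg_bound _ _ _ (eps * (2 * s * S))%R).
      - apply CS_lin. apply GHyp_CS; auto.
      - intros t Ht. rewrite Psi_path. unfold R.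
        replace (F (Psi a0 b0 c0 (ucomb u v t)) - (F p - p * l) - l * Psi a0 b0 c0 (ucomb u v t)) with
          (F (Psi a0 b0 c0 (ucomb u v t)) - F p - (Psi a0 b0 c0 (ucomb u v t) - p) * l) by ring.
        assert (Hc := pclose_Psi a0 b0 c0 _ _ _ (Cl _ (pclose_comb u v u1 s t Hu1 Hv1 Ht))). fold S p in Hc.
        replace ((s + s) * S)%R with (2 * s * S)%R in Hc by ring.
        eapply Rle_trans. apply Hd. lra. apply Rmult_le_compat_l; lra.
      - apply Rmult_le_compat_r. apply Rmult_le_pos; [lra|]. nra. exact Huv'. }
    assert (Etri : triP a0 b0 c0 F (T n) = tri R (Psi a0 b0 c0 u1) (Psi a0 b0 c0 u2) (Psi a0 b0 c0 u3)).
    { unfold triP. fold u1 u2 u3. apply tri_lin; apply GHyp_CS; auto. }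
    assert (Bn : (Cmod (triP a0 b0 c0 F (T n)) <= 3 * (s * S * (eps * (2 * s * S))))%R).
    { rewrite Etri. unfold tri.
      eapply Rle_trans. apply Cmod_triangle. eapply Rle_trans. apply Rplus_le_compat_r. apply Cmod_triangle.
      assert (X1 := EB u1 u2 Iu Iv C1 C2 P1). assert (X2 := EB u2 u3 Iv Iw C2 C3 P2).
      assert (X3 := EB u3 u1 Iw Iu C3 C1 P3). lra. }
    rewrite <- E0. eapply Rle_trans. exact I3.
    assert (E4 : (4 ^ n * (s * s) = 1)%R).
    { unfold s. rewrite <- Rpow_mult_distr, <- Rpow_mult_distr. replace (4 * (/2 * /2))%R with 1%R by field. apply pow1. }
    assert (0 <= 4 ^ n)%R by (apply pow_le; lra).
    apply Rle_trans with (4 ^ n * (3 * (s * S * (eps * (2 * s * S)))))%R.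
    apply Rmult_le_compat_l; auto.
    right. replace (4 ^ n * (3 * (s * S * (eps * (2 * s * S)))))%R with ((4 ^ n * (s * s)) * (6 * eps * (S * S)))%R by ring.
    rewrite E4. ring. }
  apply Cmod_eq_0. apply Rle_antisym; [|apply Cmod_ge_0].
  apply Rle_plus_epsilon. intros e He.
  assert (HSS : (0 < 6 * (S * S) + 1)%R) by nra.
  eapply Rle_trans. apply (Main (e / (6 * (S * S) + 1))%R). apply Rdiv_lt_0_compat; lra.
  apply Rle_trans with (e * ((6 * (S * S)) / (6 * (S * S) + 1)))%R.
  right. field. lra.
  assert ((6 * (S * S)) / (6 * (S * S) + 1) <= 1)%R.
  { apply (Rmult_le_reg_r (6 * (S * S) + 1)); auto. unfold Rdiv. rewrite Rmult_assoc, Rinv_l; lra. }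
  nra.
Qed.

Open Scope R_scope.
Open Scope R_scope.
Open Scope C_scope.

Definition HD (F : C -> C) : Prop := forall z, (Cmod z < 1)%R -> exists l, Dl F z l.

Lemma holoD_HD F : holoD F -> HD F.
Proof. intros H z Hz. destruct (H z Hz) as [l Hl]. exists l. apply is_derive_Dl. exact Hl. Qed.

Lemma HD_holoD F : HD F -> holoD F.
Proof. intros H z Hz. destruct (H z Hz) as [l Hl]. exists l. apply is_derive_Dl. exact Hl. Qed.

Lemma cint0_seg F z : cint0 F z = seg F 0 z.
Proof.
  unfold cint0, seg, pint. replace (z - 0) with z by ring. f_equal.
  apply RInt_ext. intros t _. f_equal. unfold path. ring.
Qed.

Lemma comb_disc (a b : C) (p q : R) : (0 <= p)%R -> (0 <= q)%R -> (p + q <= 1)%R ->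
  (Cmod a < 1)%R -> (Cmod b < 1)%R -> (Cmod (RtoC p * a + RtoC q * b) < 1)%R.
Proof.
  intros Hp Hq Hpq Ha Hb. eapply Rle_lt_trans. apply Cmod_triangle. rewrite !Cmod_mult, !Cmod_R.
  rewrite !Rabs_right by lra.
  pose proof (Cmod_ge_0 a). pose proof (Cmod_ge_0 b).
  destruct (Req_dec p 0) as [->|Hp0].
  - destruct (Req_dec q 0) as [->|Hq0]; nra.
  - nra.
Qed.

Lemma path_disc a b t : (Cmod a < 1)%R -> (Cmod b < 1)%R -> (0 <= t <= 1)%R -> (Cmod (path a b t) < 1)%R.
Proof.
  intros Ha Hb Ht. replace (path a b t) with (RtoC (1 - t) * a + RtoC t * b).
  apply comb_disc; auto; lra. unfold path. rewrite RtoC_minus. ring.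
Qed.

Lemma HD_CS F a b : HD F -> (Cmod a < 1)%R -> (Cmod b < 1)%R -> CS F a b.
Proof.
  intros H Ha Hb t Ht. destruct (H (path a b t) (path_disc a b t Ha Hb Ht)) as [l Hl].
  eapply Dl_Cc; eauto.
Qed.

Lemma HD_GHyp F a b c : HD F -> (Cmod a < 1)%R -> (Cmod b < 1)%R -> (Cmod c < 1)%R -> GHyp a b c F.
Proof.
  intros H Ha Hb Hc u [H1 [H2 H3]]. apply H.
  replace (Psi a b c u) with (RtoC (1 - fst u - snd u) * a + RtoC (fst u) * b + RtoC (snd u) * c).
  2: { unfold Psi. rewrite !RtoC_minus. ring. }
  destruct (Req_dec (fst u + snd u) 0) as [E|E].
  - assert (fst u = 0)%R by lra. assert (snd u = 0)%R by lra.
    rewrite H0, H4. replace (RtoC (1 - 0 - 0) * a + RtoC 0 * b + RtoC 0 * c) with a.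
    auto. replace (1 - 0 - 0)%R with 1%R by ring. ring.
  - set (s := (fst u + snd u)%R).
    replace (RtoC (1 - fst u - snd u) * a + RtoC (fst u) * b + RtoC (snd u) * c) with
      (RtoC (1 - s) * a + RtoC s * (RtoC (fst u / s) * b + RtoC (snd u / s) * c)).
    2: { unfold s. rewrite !RtoC_minus, !RtoC_div, !RtoC_plus by auto. field.
         intro X. apply E. rewrite <- RtoC_plus in X. apply RtoC_inj in X. exact X. }
    apply comb_disc; unfold s; try lra.
    apply comb_disc; auto.
    apply Rdiv_le_0_compat; lra. apply Rdiv_le_0_compat; lra.
    replace (fst u / (fst u + snd u) + snd u / (fst u + snd u))%R with 1%R by (field; auto). lra.
Qed.

Theorem primitive_thm F : HD F -> forall z, (Cmod z < 1)%R -> Dl (cint0 F) z (F z).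
Proof.
  intros H z Hz eps Heps.
  destruct (H z Hz) as [l Hl]. destruct (Dl_Cc F z l Hl eps Heps) as [d1 [Hd1 K1]].
  exists (Rmin d1 (1 - Cmod z)). split. apply Rmin_pos; lra.
  intros w Hw.
  assert (Hw1 : (Cmod (w - z) < d1)%R) by (eapply Rlt_le_trans; [exact Hw|apply Rmin_l]).
  assert (Hw2 : (Cmod w < 1)%R).
  { assert (Cmod (w - z) < 1 - Cmod z)%R by (eapply Rlt_le_trans; [exact Hw|apply Rmin_r]).
    assert (T := Cmod_triangle (w - z) z). replace (w - z + z) with w in T by ring. lra. }
  assert (H0 : (Cmod 0 < 1)%R) by (rewrite Cmod_0; lra).
  assert (G := goursat 0 z w F (HD_GHyp F 0 z w H H0 Hz Hw2)).
  unfold tri in G. rewrite (seg_rev F 0 w (HD_CS F 0 w H H0 Hw2)) in G.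
  rewrite !cint0_seg.
  replace (seg F 0 w - seg F 0 z - (w - z) * F z) with (seg F z w - (w - z) * F z).
  2: { assert (E : seg F 0 w = seg F 0 z + seg F z w).
       { transitivity (seg F 0 w + (seg F 0 z + seg F z w + - seg F 0 w)). rewrite G. ring. ring. }
       rewrite E. ring. }
  replace (seg F z w - (w - z) * F z) with (seg (fun x => F x - F z - 0 * x) z w).
  2: { rewrite seg_lin by (apply HD_CS; auto). ring. }
  rewrite Rmult_comm.
  apply seg_bound. apply CS_lin. apply HD_CS; auto.
  intros t Ht. replace (F (path z w t) - F z - 0 * path z w t) with (F (path z w t) - F z) by ring.
  apply Rlt_le. apply K1.
  replace (path z w t - z) with (RtoC t * (w - z)) by (unfold path; ring).
  rewrite Cmod_mult, Cmod_R, Rabs_right by lra.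
  pose proof (Cmod_ge_0 (w - z)). nra.
Qed.

Open Scope R_scope.
Open Scope R_scope.
Open Scope C_scope.

Lemma seg_ub F X Y : CS F X Y -> exists M, (0 <= M)%R /\ forall t, (0 <= t <= 1)%R -> (Cmod (F (path X Y t)) <= M)%R.
Proof.
  intros H. destruct (ex_RInt_ub (V := C_R_NormedModule) _ _ _ (ex_pint F X Y 0 1 H ltac:(lra) ltac:(lra))) as [M HM].
  exists M. split.
  - specialize (HM 0%R). rewrite Rmin_left, Rmax_right in HM by lra. specialize (HM ltac:(lra)).
    rewrite prod_norm_Cmod in HM. pose proof (Cmod_ge_0 (F (path X Y 0))). lra.
  - intros t Ht. specialize (HM t). rewrite Rmin_left, Rmax_right in HM by lra.
    specialize (HM Ht). rewrite prod_norm_Cmod in HM. exact HM.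
Qed.

Lemma dui (F : C -> C) (Phi : C -> C -> C) (Phi1 : C -> C) X Y z d Cst :
  (0 < d)%R -> (0 <= Cst)%R -> CS F X Y ->
  (forall z', (Cmod (z' - z) < d)%R -> CS (fun w => F w * Phi z' w) X Y) ->
  CS (fun w => F w * Phi1 w) X Y ->
  (forall z' t, (Cmod (z' - z) < d)%R -> (0 <= t <= 1)%R ->
     (Cmod (Phi z' (path X Y t) - Phi z (path X Y t) - (z' - z) * Phi1 (path X Y t))
       <= Cst * (Cmod (z' - z) * Cmod (z' - z)))%R) ->
  Dl (fun z' => seg (fun w => F w * Phi z' w) X Y) z (seg (fun w => F w * Phi1 w) X Y).
Proof.
  intros Hd HC HF HP HP1 HB eps Heps.
  destruct (seg_ub F X Y HF) as [MF [HMF BF]].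
  set (K := (Cmod (Y - X) * MF * Cst + 1)%R).
  assert (HK : (0 < K)%R) by (unfold K; pose proof (Cmod_ge_0 (Y - X)); assert (0 <= Cmod (Y - X) * MF * Cst)%R by (apply Rmult_le_pos; [apply Rmult_le_pos|]; auto); lra).
  exists (Rmin d (eps / K)). split. apply Rmin_pos; auto. apply Rdiv_lt_0_compat; auto.
  intros z' Hz'.
  assert (Hz1 : (Cmod (z' - z) < d)%R) by (eapply Rlt_le_trans; [exact Hz'|apply Rmin_l]).
  assert (Hz2 : (Cmod (z' - z) < eps / K)%R) by (eapply Rlt_le_trans; [exact Hz'|apply Rmin_r]).
  assert (Hzz : (Cmod (z - z) < d)%R) by (replace (z - z) with (RtoC 0) by ring; rewrite Cmod_0; auto).
  assert (E : seg (fun w => F w * Phi z' w) X Y - seg (fun w => F w * Phi z w) X Y - (z' - z) * seg (fun w => F w * Phi1 w) X Y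
            = seg (fun w => F w * Phi z' w + ((-1) * (F w * Phi z w) + (- (z' - z)) * (F w * Phi1 w))) X Y).
  { rewrite seg_plus; auto. rewrite seg_plus. rewrite !seg_scal; auto. ring.
    apply CS_scal; auto. apply CS_scal; auto.
    apply CS_plus; apply CS_scal; auto. }
  rewrite E. clear E.
  eapply Rle_trans. apply (seg_bound _ _ _ (MF * (Cst * (Cmod (z' - z) * Cmod (z' - z))))%R).
  - apply CS_plus. auto. apply CS_plus; apply CS_scal; auto.
  - intros t Ht.
    replace (F (path X Y t) * Phi z' (path X Y t) + (-1 * (F (path X Y t) * Phi z (path X Y t)) + - (z' - z) * (F (path X Y t) * Phi1 (path X Y t))))
      with (F (path X Y t) * (Phi z' (path X Y t) - Phi z (path X Y t) - (z' - z) * Phi1 (path X Y t))) by ring.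
    rewrite Cmod_mult. apply Rmult_le_compat; auto using Cmod_ge_0.
  - pose proof (Cmod_ge_0 (z' - z)). pose proof (Cmod_ge_0 (Y - X)).
    assert (A : (Cmod (z' - z) * K <= eps)%R).
    { apply Rmult_lt_compat_r with (r := K) in Hz2; auto.
      replace (eps / K * K)%R with eps in Hz2 by (field; lra). lra. }
    replace (Cmod (Y - X) * (MF * (Cst * (Cmod (z' - z) * Cmod (z' - z)))))%R with
      (Cmod (z' - z) * ((Cmod (Y - X) * MF * Cst) * Cmod (z' - z)))%R by ring.
    assert (B : (Cmod (Y - X) * MF * Cst * Cmod (z' - z) <= K * Cmod (z' - z))%R).
    { apply Rmult_le_compat_r; auto. unfold K; lra. }
    assert (Cmod (z' - z) * (Cmod (Y - X) * MF * Cst * Cmod (z' - z)) <= Cmod (z' - z) * (K * Cmod (z' - z)))%R.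
    { apply Rmult_le_compat_l; auto. }
    nra.
Qed.

Lemma inv_bound (A : C) (d : R) : (0 < d)%R -> (d <= Cmod A)%R -> (Cmod (/ A) <= / d)%R.
Proof.
  intros Hd HA. assert (A <> 0). { intro E. rewrite E, Cmod_0 in HA. lra. }
  rewrite Cmod_inv by auto. apply Rinv_le_contravar; auto.
Qed.

Lemma kb1 (A B : C) (d : R) : (0 < d)%R -> (d <= Cmod A)%R -> (d / 2 <= Cmod B)%R ->
  (Cmod (/ B - / A - (A - B) * (/ A * / A)) <= (2 / (d * d * d)) * (Cmod (A - B) * Cmod (A - B)))%R.
Proof.
  intros Hd HA HB. assert (HA0 : A <> 0). { intro E. rewrite E, Cmod_0 in HA. lra. }
  assert (HB0 : B <> 0). { intro E. rewrite E, Cmod_0 in HB. lra. }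
  replace (/ B - / A - (A - B) * (/ A * / A)) with ((A - B) * (A - B) * (/ A * / A * / B)) by (field; auto).
  rewrite !Cmod_mult.
  assert (IA := inv_bound A d Hd HA). assert (IB := inv_bound B (d/2) ltac:(lra) HB).
  pose proof (Cmod_ge_0 (/ A)). pose proof (Cmod_ge_0 (/ B)). pose proof (Cmod_ge_0 (A - B)).
  assert (P : (Cmod (/ A) * Cmod (/ A) * Cmod (/ B) <= / d * / d * / (d / 2))%R).
  { apply Rmult_le_compat; auto. apply Rmult_le_pos; auto. apply Rmult_le_compat; auto. }
  replace (/ d * / d * / (d / 2))%R with (2 / (d * d * d))%R in P by (field; lra).
  rewrite (Rmult_comm (2 / (d * d * d))). apply Rmult_le_compat_l; auto. apply Rmult_le_pos; auto.
Qed.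

Lemma kb2 (A B : C) (d : R) : (0 < d)%R -> (d <= Cmod A)%R -> (d / 2 <= Cmod B)%R ->
  (Cmod (/ B * / B - / A * / A - (A - B) * (2 * / A * / A * / A)) <= (8 / (d * d * d * d)) * (Cmod (A - B) * Cmod (A - B)))%R.
Proof.
  intros Hd HA HB. assert (HA0 : A <> 0). { intro E. rewrite E, Cmod_0 in HA. lra. }
  assert (HB0 : B <> 0). { intro E. rewrite E, Cmod_0 in HB. lra. }
  replace (/ B * / B - / A * / A - (A - B) * (2 * / A * / A * / A)) with
    ((A - B) * (A - B) * (/ A * / A * / B * / B + 2 * (/ A * / A * / A * / B))) by (field; auto).
  rewrite Cmod_mult. rewrite (Rmult_comm (8 / (d * d * d * d))). apply Rmult_le_compat.
  apply Cmod_ge_0. apply Cmod_ge_0. rewrite Cmod_mult; lra.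
  assert (IA := inv_bound A d Hd HA). assert (IB := inv_bound B (d/2) ltac:(lra) HB).
  pose proof (Cmod_ge_0 (/ A)). pose proof (Cmod_ge_0 (/ B)).
  eapply Rle_trans. apply Cmod_triangle. rewrite !Cmod_mult. rewrite Cmod_R, Rabs_right by lra.
  assert (P1 : (Cmod (/ A) * Cmod (/ A) * Cmod (/ B) * Cmod (/ B) <= / d * / d * / (d / 2) * / (d / 2))%R).
  { repeat apply Rmult_le_compat; auto; repeat apply Rmult_le_pos; auto. }
  assert (P2 : (Cmod (/ A) * Cmod (/ A) * Cmod (/ A) * Cmod (/ B) <= / d * / d * / d * / (d / 2))%R).
  { repeat apply Rmult_le_compat; auto; repeat apply Rmult_le_pos; auto. }
  replace (8 / (d * d * d * d))%R with (/ d * / d * / (d / 2) * / (d / 2) + 2 * (/ d * / d * / d * / (d / 2)))%R by (field; lra).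
  lra.
Qed.

Lemma Dl_kinv (z' w : C) : w <> z' -> Dl (fun x => / (x - z')) w (- / ((w - z') * (w - z'))).
Proof.
  intros H. apply (Dl_eq _ _ ((1 - 0) * (- / ((w - z') * (w - z'))))).
  apply (Dl_comp (fun y => / y) (fun x => x - z')).
  apply Dl_inv. intro E. apply H. replace w with ((w - z') + z') by ring. rewrite E. ring.
  apply Dl_minus. apply Dl_id. apply Dl_const. ring.
Qed.

Lemma Cc_kinv (z' w : C) : w <> z' -> Cc (fun x => / (x - z')) w.
Proof. intros H. eapply Dl_Cc. apply Dl_kinv; auto. Qed.

Definition ED (X Y z : C) (d : R) : Prop := forall t, (0 <= t <= 1)%R -> (d <= Cmod (path X Y t - z))%R.

Lemma ED_shift X Y z d z' : ED X Y z d -> (Cmod (z' - z) < d / 2)%R -> ED X Y z' (d / 2).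
Proof.
  intros H Hz t Ht. specialize (H t Ht).
  assert (T := Cmod_triangle (path X Y t - z') (z' - z)). replace (path X Y t - z' + (z' - z)) with (path X Y t - z) in T by ring.
  lra.
Qed.

Lemma ED_neq X Y z d t : (0 < d)%R -> ED X Y z d -> (0 <= t <= 1)%R -> path X Y t <> z.
Proof.
  intros Hd H Ht E. specialize (H t Ht). rewrite E in H. replace (z - z) with (RtoC 0) in H by ring.
  rewrite Cmod_0 in H. lra.
Qed.

Lemma CS_k1 F X Y z d : (0 < d)%R -> CS F X Y -> ED X Y z d -> CS (fun w => F w * / (w - z)) X Y.
Proof.
  intros Hd HF H t Ht. apply Cc_mult. apply HF; auto. apply Cc_kinv. eapply ED_neq; eauto.
Qed.

Lemma CS_k2 F X Y z d : (0 < d)%R -> CS F X Y -> ED X Y z d -> CS (fun w => F w * (/ (w - z) * / (w - z))) X Y.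
Proof.
  intros Hd HF H t Ht. apply Cc_mult. apply HF; auto. apply Cc_mult; apply Cc_kinv; eapply ED_neq; eauto.
Qed.

Lemma CS_k3 F X Y z d : (0 < d)%R -> CS F X Y -> ED X Y z d -> CS (fun w => F w * (2 * / (w - z) * / (w - z) * / (w - z))) X Y.
Proof.
  intros Hd HF H t Ht. apply Cc_mult. apply HF; auto.
  repeat apply Cc_mult; try apply Cc_const; apply Cc_kinv; eapply ED_neq; eauto.
Qed.

Lemma dui_k1 F X Y z d : (0 < d)%R -> CS F X Y -> ED X Y z d ->
  Dl (fun z' => seg (fun w => F w * / (w - z')) X Y) z (seg (fun w => F w * (/ (w - z) * / (w - z))) X Y).
Proof.
  intros Hd HF H.
  apply (dui F (fun z' w => / (w - z')) (fun w => / (w - z) * / (w - z)) X Y z (d / 2) (2 / (d * d * d))).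
  lra. apply Rlt_le, Rdiv_lt_0_compat; [lra|]. repeat apply Rmult_lt_0_compat; lra.
  auto.
  intros z' Hz'. apply (CS_k1 F X Y z' (d/2)); auto. lra. apply (ED_shift X Y z d z' H); auto.
  apply (CS_k2 F X Y z d); auto.
  intros z' t Hz' Ht.
  replace (z' - z) with ((path X Y t - z) - (path X Y t - z')) by ring.
  apply kb1; auto. apply (ED_shift X Y z d z' H); auto.
Qed.

Lemma dui_k2 F X Y z d : (0 < d)%R -> CS F X Y -> ED X Y z d ->
  Dl (fun z' => seg (fun w => F w * (/ (w - z') * / (w - z'))) X Y) z
     (seg (fun w => F w * (2 * / (w - z) * / (w - z) * / (w - z))) X Y).
Proof.
  intros Hd HF H.
  apply (dui F (fun z' w => / (w - z') * / (w - z')) (fun w => 2 * / (w - z) * / (w - z) * / (w - z)) X Y z (d / 2) (8 / (d * d * d * d))).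
  lra. apply Rlt_le, Rdiv_lt_0_compat; [lra|]. repeat apply Rmult_lt_0_compat; lra.
  auto.
  intros z' Hz'. apply (CS_k2 F X Y z' (d/2)); auto. lra. apply (ED_shift X Y z d z' H); auto.
  apply (CS_k3 F X Y z d); auto.
  intros z' t Hz' Ht.
  replace (z' - z) with ((path X Y t - z) - (path X Y t - z')) by ring.
  apply kb2; auto. apply (ED_shift X Y z d z' H); auto.
Qed.

Lemma seg_k2_zero X Y z d : (0 < d)%R -> ED X Y z d ->
  seg (fun w => 1 * (/ (w - z) * / (w - z))) X Y = (- / (Y - z)) - (- / (X - z)).
Proof.
  intros Hd H.
  apply (seg_ftc (fun w => - / (w - z)) (fun w => 1 * (/ (w - z) * / (w - z)))).
  - intros t Ht. assert (Hn := ED_neq X Y z d t Hd H Ht).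
    apply (Dl_eq _ _ (- 1 * (- / ((path X Y t - z) * (path X Y t - z))))).
    apply (Dl_ext (fun w => (- 1) * / (w - z))). 2: intros; ring.
    apply Dl_scal. apply Dl_kinv; auto.
    field. intro E; apply Hn; replace (path X Y t) with ((path X Y t - z) + z) by ring; rewrite E; ring.
  - apply (CS_k2 (fun _ => 1) X Y z d); auto. apply CS_const.
Qed.

Open Scope R_scope.
Open Scope R_scope.
Open Scope C_scope.

Definition cr (u v : C) : R := (fst u * snd v - snd u * fst v)%R.

Definition qf (F : C -> C) (z w : C) : C :=
  if Req_EM_T (Cmod (w - z)) 0 then Cderiv F z else (F w - F z) / (w - z).

Lemma HD_Dl F z : HD F -> (Cmod z < 1)%R -> Dl F z (Cderiv F z).
Proof.
  intros H Hz. apply Cderiv_spec. destruct (H z Hz) as [l Hl]. exists l. apply is_derive_Dl; auto.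
Qed.

Lemma Cmod_sub_0 (w z : C) : Cmod (w - z) = 0%R -> w = z.
Proof. intros E. apply Cmod_eq_0 in E. replace w with ((w - z) + z) by ring. rewrite E. ring. Qed.

Lemma Cmod_sub_neq (w z : C) : w <> z -> Cmod (w - z) <> 0%R.
Proof. intros H E. apply H. apply Cmod_sub_0; auto. Qed.

Lemma q_Cc_z F z : HD F -> (Cmod z < 1)%R -> Cc (qf F z) z.
Proof.
  intros H Hz eps Heps. destruct (HD_Dl F z H Hz (eps / 2)%R ltac:(lra)) as [d [Hd Hd']].
  exists d. split; auto. intros w Hw.
  unfold qf. destruct (Req_EM_T (Cmod (z - z)) 0) as [_|E].
  2: { exfalso. apply E. replace (z - z) with (RtoC 0) by ring. apply Cmod_0. }
  destruct (Req_EM_T (Cmod (w - z)) 0) as [E|E].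
  - replace (Cderiv F z - Cderiv F z) with (RtoC 0) by ring. rewrite Cmod_0. lra.
  - assert (Hwz : w - z <> 0). { intro X. apply E. rewrite X. apply Cmod_0. }
    replace ((F w - F z) / (w - z) - Cderiv F z) with ((F w - F z - (w - z) * Cderiv F z) / (w - z)) by (field; auto).
    rewrite Cmod_div by auto. specialize (Hd' w Hw).
    assert (P : (0 < Cmod (w - z))%R) by (pose proof (Cmod_ge_0 (w - z)); lra).
    apply (Rmult_lt_reg_r (Cmod (w - z))); auto. unfold Rdiv. rewrite Rmult_assoc, Rinv_l by lra. nra.
Qed.

Lemma q_Dl F z w : HD F -> (Cmod w < 1)%R -> w <> z -> exists l, Dl (qf F z) w l.
Proof.
  intros H Hw Hwz. destruct (H w Hw) as [l Hl].
  eexists. apply (Dl_ext_loc (fun x => (F x - F z) * / (x - z))).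
  - apply Dl_mult. apply Dl_minus. exact Hl. apply Dl_const. apply Dl_kinv; auto.
  - exists (Cmod (w - z)). split. pose proof (Cmod_ge_0 (w - z)). pose proof (Cmod_sub_neq _ _ Hwz). lra.
    intros x Hx. unfold qf. destruct (Req_EM_T (Cmod (x - z)) 0) as [E|E].
    + exfalso. apply Cmod_sub_0 in E. subst x. rewrite Cmod_sub_sym in Hx. lra.
    + reflexivity.
Qed.

Lemma q_Cc F z w : HD F -> (Cmod z < 1)%R -> (Cmod w < 1)%R -> Cc (qf F z) w.
Proof.
  intros H Hz Hw. destruct (Req_EM_T (Cmod (w - z)) 0) as [E|E].
  - apply Cmod_sub_0 in E. subst. apply q_Cc_z; auto.
  - assert (w <> z) by (intro X; apply E; subst; replace (z - z) with (RtoC 0) by ring; apply Cmod_0).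
    destruct (q_Dl F z w H Hw H0) as [l Hl]. eapply Dl_Cc; eauto.
Qed.

Lemma Psi_disc z a b u : (Cmod z < 1)%R -> (Cmod a < 1)%R -> (Cmod b < 1)%R -> inS u -> (Cmod (Psi z a b u) < 1)%R.
Proof.
  intros Hz Ha Hb Hu.
  destruct Hu as [H1 [H2 H3]].
  replace (Psi z a b u) with (RtoC (1 - fst u - snd u) * z + RtoC (fst u) * a + RtoC (snd u) * b).
  2: { unfold Psi. rewrite !RtoC_minus. ring. }
  eapply Rle_lt_trans. apply Cmod_triangle. eapply Rle_lt_trans. apply Rplus_le_compat_r. apply Cmod_triangle.
  rewrite !Cmod_mult, !Cmod_R. rewrite !Rabs_right by lra.
  pose proof (Cmod_ge_0 z). pose proof (Cmod_ge_0 a). pose proof (Cmod_ge_0 b).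
  assert ((1 - fst u - snd u) * Cmod z <= (1 - fst u - snd u))%R by (rewrite <- (Rmult_1_r (1 - fst u - snd u)) at 2; apply Rmult_le_compat_l; lra).
  destruct (Req_dec (fst u) 0) as [E1|E1]; destruct (Req_dec (snd u) 0) as [E2|E2].
  - rewrite E1, E2. replace (1 - 0 - 0)%R with 1%R by ring. lra.
  - assert (snd u * Cmod b < snd u)%R by (apply Rmult_lt_compat_l with (r := snd u) in Hb; lra).
    assert (fst u * Cmod a <= fst u)%R by nra. lra.
  - assert (fst u * Cmod a < fst u)%R by (apply Rmult_lt_compat_l with (r := fst u) in Ha; lra).
    assert (snd u * Cmod b <= snd u)%R by nra. lra.
  - assert (fst u * Cmod a < fst u)%R by (apply Rmult_lt_compat_l with (r := fst u) in Ha; lra).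
    assert (snd u * Cmod b <= snd u)%R by nra. lra.
Qed.

Lemma nondeg_neq z a b (l m : R) : cr (a - z) (b - z) <> 0%R -> (0 < l + m)%R ->
  Psi z a b (l, m) <> z.
Proof.
  intros Hc Hlm E. unfold Psi in E. simpl in E.
  assert (E2 : RtoC l * (a - z) + RtoC m * (b - z) = 0).
  { replace (RtoC l * (a - z) + RtoC m * (b - z)) with (z + RtoC l * (a - z) + RtoC m * (b - z) - z) by ring.
    rewrite E. ring. }
  unfold cr in Hc. destruct (a - z) as [A1 A2], (b - z) as [B1 B2]. simpl in Hc.
  unfold RtoC, Cmult, Cplus in E2. simpl in E2. injection E2. intros E4 E3.
  assert (X1 : (l * A1 + m * B1 = 0)%R) by lra.
  assert (X2 : (l * A2 + m * B2 = 0)%R) by lra.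
  assert (L : (l * (A1 * B2 - A2 * B1) = 0)%R).
  { replace (l * (A1 * B2 - A2 * B1))%R with (B2 * (l * A1 + m * B1) - B1 * (l * A2 + m * B2))%R by ring.
    rewrite X1, X2. ring. }
  assert (M : (m * (A1 * B2 - A2 * B1) = 0)%R).
  { replace (m * (A1 * B2 - A2 * B1))%R with (A1 * (l * A2 + m * B2) - A2 * (l * A1 + m * B1))%R by ring.
    rewrite X1, X2. ring. }
  apply Rmult_integral in L. apply Rmult_integral in M.
  destruct L as [L|L]; [|tauto]. destruct M as [M|M]; [|tauto]. lra.
Qed.

Definition aff (v1 v2 v3 u : R * R) : R * R :=
  (fst v1 + fst u * (fst v2 - fst v1) + snd u * (fst v3 - fst v1),
   snd v1 + fst u * (snd v2 - snd v1) + snd u * (snd v3 - snd v1))%R.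

Lemma Psi_aff z a b v1 v2 v3 u :
  Psi (Psi z a b v1) (Psi z a b v2) (Psi z a b v3) u = Psi z a b (aff v1 v2 v3 u).
Proof. destruct v1, v2, v3, u. unfold Psi, aff. simpl. ceq. Qed.

Definition Ts (s : R) : ptri := mkT (0, 0)%R (s, 0)%R (0, s)%R.

Lemma inST_Ts s : (0 <= s <= 1)%R -> inST (Ts s).
Proof. intros H. unfold inST, inS, Ts. simpl. lra. Qed.

Lemma sub1_Ts s : sub1 (Ts s) = Ts (s / 2).
Proof. unfold sub1, Ts, pmid. simpl. f_equal; f_equal; field. Qed.

Lemma corner F z a b : HD F -> (Cmod z < 1)%R -> (Cmod a < 1)%R -> (Cmod b < 1)%R ->
  cr (a - z) (b - z) <> 0%R -> tri (qf F z) z a b = 0.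
Proof.
  intros HF Hz Ha Hb Hc. set (G := qf F z).
  assert (HGC : GC z a b G).
  { intros u Hu. apply q_Cc; auto. apply Psi_disc; auto. }
  assert (Hcor : forall u, inS u -> (0 < fst u + snd u)%R -> exists l, Dl G (Psi z a b u) l).
  { intros u Hu Hp. apply q_Dl; auto. apply Psi_disc; auto.
    destruct u as [l m]. apply nondeg_neq; auto. }
  assert (Step : forall s, (0 < s <= 1)%R -> triP z a b G (Ts s) = triP z a b G (Ts (s / 2))).
  { intros s Hs. rewrite (subdiv z a b G (Ts s) HGC (inST_Ts s ltac:(lra))).
    rewrite sub1_Ts.
    assert (Z2 : triP z a b G (sub2 (Ts s)) = 0).
    { unfold triP. apply goursat. intros u Hu. rewrite Psi_aff. apply Hcor;
      unfold inS, aff, sub2, Ts, pmid in *; simpl in *; nra. }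
    assert (Z3 : triP z a b G (sub3 (Ts s)) = 0).
    { unfold triP. apply goursat. intros u Hu. rewrite Psi_aff. apply Hcor;
      unfold inS, aff, sub3, Ts, pmid in *; simpl in *; nra. }
    assert (Z4 : triP z a b G (sub4 (Ts s)) = 0).
    { unfold triP. apply goursat. intros u Hu. rewrite Psi_aff. apply Hcor;
      unfold inS, aff, sub4, Ts, pmid in *; simpl in *; nra. }
    rewrite Z2, Z3, Z4. ring. }
  assert (Iter : forall n, triP z a b G (Ts 1) = triP z a b G (Ts ((/2) ^ n))).
  { induction n. simpl. reflexivity. rewrite IHn. rewrite Step. simpl. f_equal. f_equal. field.
    split. apply pow_half_pos. apply (pow_half_le 0 n). lia. }
  assert (E1 : triP z a b G (Ts 1) = tri G z a b).
  { unfold triP, Ts. simpl.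
    replace (Psi z a b (0%R, 0%R)) with z by (unfold Psi; simpl; ceq).
    replace (Psi z a b (1%R, 0%R)) with a by (unfold Psi; simpl; ceq).
    replace (Psi z a b (0%R, 1%R)) with b by (unfold Psi; simpl; ceq). reflexivity. }
  rewrite <- E1.
  destruct (q_Cc_z F z HF Hz 1%R Rlt_0_1) as [del [Hdel Hd]]. fold G in Hd.
  set (L := (Cmod (a - z) + Cmod (b - z))%R).
  assert (HL : (0 <= L)%R) by (unfold L; pose proof (Cmod_ge_0 (a - z)); pose proof (Cmod_ge_0 (b - z)); lra).
  set (M := (Cmod (G z) + 1)%R).
  assert (HM : (0 < M)%R) by (unfold M; pose proof (Cmod_ge_0 (G z)); lra).
  assert (Small : forall s, (0 < s <= 1)%R -> (s * L < del)%R ->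
            (Cmod (triP z a b G (Ts s)) <= 3 * (s * L * M))%R).
  { intros s Hs HsL.
    assert (Ez : Psi z a b (0%R, 0%R) = z) by (unfold Psi; simpl; ceq).
    assert (EB : forall u v, pclose u (0%R, 0%R) s -> pclose v (0%R, 0%R) s -> pclose u v s -> inS u -> inS v ->
               (Cmod (seg G (Psi z a b u) (Psi z a b v)) <= s * L * M)%R).
    { intros u v Hu Hv Huv Iu Iv.
      eapply Rle_trans. apply (seg_bound _ _ _ M). apply GC_CS; auto.
      - intros t Ht. rewrite Psi_path.
        assert (Hcc := pclose_Psi z a b _ _ _ (pclose_comb u v (0%R, 0%R) s t Hu Hv Ht)).
        rewrite Ez in Hcc. fold L in Hcc.
        assert (Hd' := Hd (Psi z a b (ucomb u v t)) ltac:(lra)).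
        assert (T := Cmod_triangle (G (Psi z a b (ucomb u v t)) - G z) (G z)).
        replace (G (Psi z a b (ucomb u v t)) - G z + G z) with (G (Psi z a b (ucomb u v t))) in T by ring.
        unfold M. lra.
      - apply Rmult_le_compat_r. lra. apply pclose_Psi. apply pclose_sym; auto. }
    unfold triP, Ts, tri. simpl.
    assert (c1 : pclose (0%R, 0%R) (0%R, 0%R) s) by (unfold pclose; simpl; lra).
    assert (c2 : pclose (s, 0%R) (0%R, 0%R) s) by (unfold pclose; simpl; lra).
    assert (c3 : pclose (0%R, s) (0%R, 0%R) s) by (unfold pclose; simpl; lra).
    assert (i1 : inS (0%R, 0%R)) by (unfold inS; simpl; lra).
    assert (i2 : inS (s, 0%R)) by (unfold inS; simpl; lra).
    assert (i3 : inS (0%R, s)) by (unfold inS; simpl; lra).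
    assert (X1 := EB _ _ c1 c2 ltac:(unfold pclose; simpl; lra) i1 i2).
    assert (X2 := EB _ _ c2 c3 ltac:(unfold pclose; simpl; lra) i2 i3).
    assert (X3 := EB _ _ c3 c1 ltac:(unfold pclose; simpl; lra) i3 i1).
    eapply Rle_trans. apply Cmod_triangle. eapply Rle_trans. apply Rplus_le_compat_r. apply Cmod_triangle.
    lra. }
  apply Cmod_eq_0. apply Rle_antisym; [|apply Cmod_ge_0].
  apply Rle_plus_epsilon. intros e He.
  set (K := (3 * (L + 1) * M)%R). assert (HK : (0 < K)%R) by (unfold K; nra).
  destruct (small_pow (Rmin (del / (L + 1)) (e / K))) as [n Hn].
  { apply Rmin_pos; apply Rdiv_lt_0_compat; lra. }
  set (s := ((/2) ^ n)%R) in *.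
  assert (Hs : (0 < s <= 1)%R) by (split; [apply pow_half_pos| apply (pow_half_le 0 n); lia]).
  assert (H1 : (s < del / (L + 1))%R) by (eapply Rlt_le_trans; [exact Hn| apply Rmin_l]).
  assert (H2 : (s < e / K)%R) by (eapply Rlt_le_trans; [exact Hn| apply Rmin_r]).
  assert (HsL : (s * L < del)%R).
  { apply Rmult_lt_compat_r with (r := (L + 1)%R) in H1; [|lra].
    replace (del / (L + 1) * (L + 1))%R with del in H1 by (field; lra). nra. }
  rewrite (Iter n). fold s. eapply Rle_trans. apply Small; auto.
  apply Rmult_lt_compat_r with (r := K) in H2; auto.
  replace (e / K * K)%R with e in H2 by (field; lra).
  unfold K in H2. assert (3 * (s * L * M) <= s * (3 * (L + 1) * M))%R by nra. lra.
Qed.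

Open Scope R_scope.
Open Scope R_scope.
Open Scope C_scope.

Definition Ntri (F : C -> C) (a b c z : C) : C := tri (fun w => F w * / (w - z)) a b c.
Definition Ktri (a b c z : C) : C := Ntri (fun _ => 1) a b c z.

Lemma Cc_CS G a b : (forall w, (Cmod w < 1)%R -> Cc G w) -> (Cmod a < 1)%R -> (Cmod b < 1)%R -> CS G a b.
Proof. intros H Ha Hb t Ht. apply H. apply path_disc; auto. Qed.

Lemma seg_q F z X Y d : HD F -> (Cmod X < 1)%R -> (Cmod Y < 1)%R -> (0 < d)%R -> ED X Y z d ->
  seg (qf F z) X Y = seg (fun w => F w * / (w - z)) X Y + (- F z) * seg (fun w => 1 * / (w - z)) X Y.
Proof.
  intros HF HX HY Hd HE.
  assert (CF : CS F X Y) by (apply HD_CS; auto).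
  rewrite (seg_ext (qf F z) (fun w => F w * / (w - z) + (- F z) * (1 * / (w - z)))).
  - rewrite seg_plus. rewrite seg_scal. reflexivity.
    apply (CS_k1 (fun _ => 1) X Y z d); auto. apply CS_const.
    apply (CS_k1 F X Y z d); auto.
    apply CS_scal. apply (CS_k1 (fun _ => 1) X Y z d); auto. apply CS_const.
  - intros t Ht. assert (Hn := ED_neq X Y z d t Hd HE Ht).
    unfold qf. destruct (Req_EM_T (Cmod (path X Y t - z)) 0) as [E|E].
    + exfalso. apply Hn. apply Cmod_sub_0; auto.
    + field. intro X0. apply Hn. replace (path X Y t) with ((path X Y t - z) + z) by ring. rewrite X0. ring.
Qed.

Theorem cauchy_formula F a b c z d : HD F ->
  (Cmod a < 1)%R -> (Cmod b < 1)%R -> (Cmod c < 1)%R -> (Cmod z < 1)%R ->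
  cr (a - z) (b - z) <> 0%R -> cr (b - z) (c - z) <> 0%R -> cr (c - z) (a - z) <> 0%R ->
  (0 < d)%R -> ED a b z d -> ED b c z d -> ED c a z d ->
  F z * Ktri a b c z = Ntri F a b c z.
Proof.
  intros HF Ha Hb Hc Hz C1 C2 C3 Hd E1 E2 E3.
  assert (HG : forall w, (Cmod w < 1)%R -> Cc (qf F z) w) by (intros; apply q_Cc; auto).
  assert (T0 : tri (qf F z) a b c = 0).
  { assert (D : tri (qf F z) a b c = tri (qf F z) z a b + tri (qf F z) z b c + tri (qf F z) z c a).
    { unfold tri. rewrite (seg_rev _ z a), (seg_rev _ z b), (seg_rev _ z c) by (apply Cc_CS; auto). ring. }
    rewrite D, !corner; auto. ring. }
  unfold tri in T0. rewrite (seg_q F z a b d), (seg_q F z b c d), (seg_q F z c a d) in T0; auto.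
  unfold Ktri, Ntri, tri.
  transitivity (F z * (seg (fun w => 1 * / (w - z)) a b + seg (fun w => 1 * / (w - z)) b c + seg (fun w => 1 * / (w - z)) c a)
     + (seg (fun w => F w * / (w - z)) a b + seg (fun w => F w * / (w - z)) b c + seg (fun w => F w * / (w - z)) c a
     + - F z * seg (fun w => 1 * / (w - z)) a b + - F z * seg (fun w => 1 * / (w - z)) b c + - F z * seg (fun w => 1 * / (w - z)) c a)
     - 0).
  rewrite <- T0. ring. ring.
Qed.

Lemma snd_k (D v : C) : v <> 0 -> snd (D * (1 * / v)) = (cr v D / (fst v ^ 2 + snd v ^ 2))%R.
Proof.
  intros Hv. assert (Hn : (fst v ^ 2 + snd v ^ 2 <> 0)%R).
  { intro E. apply Hv. destruct v as [v1 v2]. simpl in E. assert (v1 = 0)%R by nra. assert (v2 = 0)%R by nra.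
    subst. reflexivity. }
  destruct D as [D1 D2], v as [v1 v2]. unfold cr, Cinv, Cmult. simpl in *. field. simpl in Hn. lra.
Qed.

Lemma is_RInt_cst_R (c : R) : is_RInt (fun _ => c) 0 1 c.
Proof.
  assert (H := is_RInt_const (V := R_NormedModule) 0 1 c).
  unfold scal in H; simpl in H; unfold mult in H; simpl in H.
  replace ((1 - 0) * c)%R with c in H by ring. exact H.
Qed.

Lemma Im_seg_k1 X Y z d : (0 < d)%R -> ED X Y z d -> (0 < cr (X - z) (Y - X))%R ->
  (0 < snd (seg (fun w => (1 * / (w - z))%C) X Y))%R.
Proof.
  intros Hd HE Hk.
  assert (CS1 : CS (fun w => 1 * / (w - z)) X Y) by (apply (CS_k1 (fun _ => 1) X Y z d); auto; apply CS_const).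
  assert (I1 := is_RInt_Cmult _ _ _ _ (Y - X) (pint_correct _ _ _ CS1)).
  assert (I2 := is_RInt_C_snd _ _ _ _ I1). fold (seg (fun w => 1 * / (w - z)) X Y) in I2.
  set (R2 := ((Cmod (X - z) + Cmod (Y - X)) ^ 2)%R).
  assert (HR2 : (0 < R2)%R).
  { unfold R2. assert (T := HE 0%R ltac:(lra)). replace (path X Y 0 - z) with (X - z) in T by (unfold path; ring).
    pose proof (Cmod_ge_0 (Y - X)). apply pow_lt. lra. }
  apply Rlt_le_trans with (cr (X - z) (Y - X) / R2)%R. apply Rdiv_lt_0_compat; auto.
  apply (is_RInt_le (fun _ => cr (X - z) (Y - X) / R2)%R _ 0 1 _ _ ltac:(lra) (is_RInt_cst_R _) I2).
  intros t Ht. assert (Hn := ED_neq X Y z d t Hd HE ltac:(lra)).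
  assert (Hv : path X Y t - z <> 0) by (intro E; apply Hn; replace (path X Y t) with ((path X Y t - z) + z) by ring; rewrite E; ring).
  rewrite snd_k by auto.
  replace (cr (path X Y t - z) (Y - X)) with (cr (X - z) (Y - X)).
  2: { unfold cr, path. destruct X, Y, z. simpl. ring. }
  rewrite <- Cmod2_alt.
  assert (Pos : (0 < Cmod (path X Y t - z))%R) by (apply (proj1 (Cmod_gt_0 _)); auto).
  apply Rmult_le_compat_l. lra.
  apply Rinv_le_contravar. apply pow_lt; auto. unfold R2. apply pow_incr. split. lra.
  replace (path X Y t - z) with ((X - z) + RtoC t * (Y - X)) by (unfold path; ring).
  eapply Rle_trans. apply Cmod_triangle. rewrite Cmod_mult, Cmod_R, Rabs_right by lra.
  pose proof (Cmod_ge_0 (Y - X)). nra.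
Qed.

Lemma Ktri_neq0 a b c z d : (0 < d)%R -> ED a b z d -> ED b c z d -> ED c a z d ->
  (0 < cr (a - z) (b - a))%R -> (0 < cr (b - z) (c - b))%R -> (0 < cr (c - z) (a - c))%R ->
  Ktri a b c z <> 0.
Proof.
  intros Hd E1 E2 E3 K1 K2 K3 E.
  assert (S := f_equal snd E). unfold Ktri, Ntri, tri in S.
  assert (SP : forall x y : C, snd (x + y) = (snd x + snd y)%R) by (intros [] []; reflexivity).
  rewrite !SP in S. change (snd (RtoC 0)) with 0%R in S.
  assert (P1 := Im_seg_k1 a b z d Hd E1 K1). assert (P2 := Im_seg_k1 b c z d Hd E2 K2).
  assert (P3 := Im_seg_k1 c a z d Hd E3 K3). lra.
Qed.

Open Scope R_scope.
Open Scope R_scope.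
Open Scope C_scope.

Definition tA (z0 : C) (r : R) : C := z0 + ((- r)%R, (- r)%R).
Definition tB (z0 : C) (r : R) : C := z0 + (r, (- r)%R).
Definition tC (z0 : C) (r : R) : C := z0 + (0%R, r).

Lemma near_xy (z z0 : C) (r : R) : (Cmod (z - z0) < r)%R ->
  (Rabs (fst z - fst z0) < r /\ Rabs (snd z - snd z0) < r)%R.
Proof.
  intros H. pose proof (Cmod_fst (z - z0)) as H1. pose proof (Cmod_snd (z - z0)) as H2.
  replace (fst (z - z0)) with (fst z - fst z0)%R in H1 by (destruct z, z0; simpl; ring).
  replace (snd (z - z0)) with (snd z - snd z0)%R in H2 by (destruct z, z0; simpl; ring).
  split; lra.
Qed.

Lemma geom_cr z0 z r : (0 < r)%R -> (Cmod (z - z0) < r / 6)%R ->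
  (0 < cr (tA z0 r - z) (tB z0 r - z))%R /\ (0 < cr (tB z0 r - z) (tC z0 r - z))%R /\
  (0 < cr (tC z0 r - z) (tA z0 r - z))%R /\ (0 < cr (tA z0 r - z) (tB z0 r - tA z0 r))%R /\
  (0 < cr (tB z0 r - z) (tC z0 r - tB z0 r))%R /\ (0 < cr (tC z0 r - z) (tA z0 r - tC z0 r))%R.
Proof.
  intros Hr H. apply near_xy in H. destruct z0 as [p q], z as [u v]. simpl in H.
  destruct H as [H1 H2]. apply Rabs_def2 in H1. apply Rabs_def2 in H2.
  unfold cr, tA, tB, tC. simpl. repeat split; nra.
Qed.

Lemma ED_ge X Y z d : (forall t, (0 <= t <= 1)%R ->
  (d <= Rabs (fst ((path X Y t - z)%C)) \/ d <= Rabs (snd ((path X Y t - z)%C)))%R) -> ED X Y z d.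
Proof.
  intros H t Ht. destruct (H t Ht) as [E|E].
  - eapply Rle_trans. exact E. apply Cmod_fst.
  - eapply Rle_trans. exact E. apply Cmod_snd.
Qed.

Lemma geom_ED z0 z r : (0 < r)%R -> (Cmod (z - z0) < r / 6)%R ->
  ED (tA z0 r) (tB z0 r) z (r / 6) /\ ED (tB z0 r) (tC z0 r) z (r / 6) /\ ED (tC z0 r) (tA z0 r) z (r / 6).
Proof.
  intros Hr H. apply near_xy in H. destruct z0 as [p q], z as [u v]. simpl in H.
  destruct H as [H1 H2]. apply Rabs_def2 in H1. apply Rabs_def2 in H2.
  split; [|split]; apply ED_ge; intros t Ht; unfold path, tA, tB, tC; simpl.
  - right. eapply Rle_trans; [|apply Rabs_maj2]. nra.
  - destruct (Rle_dec t (2/3)) as [T|T].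
    + left. eapply Rle_trans; [|apply Rle_abs]. nra.
    + right. eapply Rle_trans; [|apply Rle_abs]. nra.
  - destruct (Rle_dec t (1/3)) as [T|T].
    + right. eapply Rle_trans; [|apply Rle_abs]. nra.
    + left. eapply Rle_trans; [|apply Rabs_maj2]. nra.
Qed.

Lemma geom_disc z0 r : (0 < r)%R -> (Cmod z0 + 2 * r < 1)%R ->
  (Cmod (tA z0 r) < 1)%R /\ (Cmod (tB z0 r) < 1)%R /\ (Cmod (tC z0 r) < 1)%R.
Proof.
  intros Hr H. unfold tA, tB, tC.
  assert (B1 := Cmod_le_sum (- r) (- r)). assert (B2 := Cmod_le_sum r (- r)). assert (B3 := Cmod_le_sum 0 r).
  rewrite Rabs_Ropp, Rabs_right in B1, B2 by lra. rewrite Rabs_R0, Rabs_right in B3 by lra.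
  repeat split; eapply Rle_lt_trans; try apply Cmod_triangle; lra.
Qed.

Definition N1tri (F : C -> C) (a b c z : C) : C := tri (fun w => F w * (/ (w - z) * / (w - z))) a b c.
Definition N2tri (F : C -> C) (a b c z : C) : C := tri (fun w => F w * (2 * / (w - z) * / (w - z) * / (w - z))) a b c.

Lemma Dl_Ntri F a b c z d : (0 < d)%R -> CS F a b -> CS F b c -> CS F c a ->
  ED a b z d -> ED b c z d -> ED c a z d -> Dl (Ntri F a b c) z (N1tri F a b c z).
Proof.
  intros Hd C1 C2 C3 E1 E2 E3. unfold Ntri, N1tri, tri.
  apply (Dl_plus (fun z' => seg (fun w => F w * / (w - z')) a b + seg (fun w => F w * / (w - z')) b c)
                 (fun z' => seg (fun w => F w * / (w - z')) c a)).
  apply (Dl_plus (fun z' => seg (fun w => F w * / (w - z')) a b) (fun z' => seg (fun w => F w * / (w - z')) b c)).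
  all: apply (dui_k1 F _ _ z d); auto.
Qed.

Lemma Dl_N1tri F a b c z d : (0 < d)%R -> CS F a b -> CS F b c -> CS F c a ->
  ED a b z d -> ED b c z d -> ED c a z d -> Dl (N1tri F a b c) z (N2tri F a b c z).
Proof.
  intros Hd C1 C2 C3 E1 E2 E3. unfold N1tri, N2tri, tri.
  apply (Dl_plus (fun z' => seg (fun w => F w * (/ (w - z') * / (w - z'))) a b + seg (fun w => F w * (/ (w - z') * / (w - z'))) b c)
                 (fun z' => seg (fun w => F w * (/ (w - z') * / (w - z'))) c a)).
  apply (Dl_plus (fun z' => seg (fun w => F w * (/ (w - z') * / (w - z'))) a b) (fun z' => seg (fun w => F w * (/ (w - z') * / (w - z'))) b c)).
  all: apply (dui_k2 F _ _ z d); auto.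
Qed.

Lemma K1_zero a b c z d : (0 < d)%R -> ED a b z d -> ED b c z d -> ED c a z d ->
  N1tri (fun _ => 1) a b c z = 0.
Proof.
  intros Hd E1 E2 E3. unfold N1tri, tri.
  rewrite (seg_k2_zero a b z d), (seg_k2_zero b c z d), (seg_k2_zero c a z d); auto. ring.
Qed.

Theorem regularity F : HD F -> HD (Cderiv F).
Proof.
  intros HF z0 Hz0.
  set (r := ((1 - Cmod z0) / 4)%R).
  assert (Hr : (0 < r)%R) by (unfold r; lra).
  assert (Hr2 : (Cmod z0 + 2 * r < 1)%R) by (unfold r; lra).
  destruct (geom_disc z0 r Hr Hr2) as [Ha [Hb Hc]].
  set (a := tA z0 r) in *. set (b := tB z0 r) in *. set (c := tC z0 r) in *.
  assert (CF1 : CS F a b) by (apply HD_CS; auto).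
  assert (CF2 : CS F b c) by (apply HD_CS; auto).
  assert (CF3 : CS F c a) by (apply HD_CS; auto).
  assert (C11 : CS (fun _ => 1) a b) by apply CS_const.
  assert (C12 : CS (fun _ => 1) b c) by apply CS_const.
  assert (C13 : CS (fun _ => 1) c a) by apply CS_const.
  assert (Key : forall z, (Cmod (z - z0) < r / 6)%R ->
     (Cmod z < 1)%R /\ Ktri a b c z <> 0 /\ F z = Ntri F a b c z * / Ktri a b c z /\
     Dl (Ntri F a b c) z (N1tri F a b c z) /\ Dl (Ktri a b c) z 0 /\
     Dl (N1tri F a b c) z (N2tri F a b c z)).
  { intros z Hz.
    assert (Hzd : (Cmod z < 1)%R).
    { assert (T := Cmod_triangle (z - z0) z0). replace (z - z0 + z0) with z in T by ring. lra. }
    destruct (geom_cr z0 z r Hr Hz) as [K1 [K2 [K3 [K4 [K5 K6]]]]].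
    destruct (geom_ED z0 z r Hr Hz) as [E1 [E2 E3]].
    assert (Hd : (0 < r / 6)%R) by lra.
    assert (KN := Ktri_neq0 a b c z (r / 6) Hd E1 E2 E3 K4 K5 K6).
    split; [|split; [|split; [|split; [|split]]]]; auto.
    - assert (CFm := cauchy_formula F a b c z (r / 6) HF Ha Hb Hc Hzd (Rgt_not_eq _ _ K1) (Rgt_not_eq _ _ K2) (Rgt_not_eq _ _ K3) Hd E1 E2 E3).
      rewrite <- CFm. field. auto.
    - apply (Dl_Ntri F a b c z (r / 6)); auto.
    - rewrite <- (K1_zero a b c z (r / 6)); auto. unfold Ktri. apply (Dl_Ntri (fun _ => 1) a b c z (r / 6)); auto.
    - apply (Dl_N1tri F a b c z (r / 6)); auto. }
  assert (Der : forall z, (Cmod (z - z0) < r / 6)%R -> Cderiv F z = N1tri F a b c z * / Ktri a b c z).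
  { intros z Hz. destruct (Key z Hz) as [Hzd [KN [_ [DN [DK _]]]]].
    apply Cderiv_eq.
    apply (Dl_eq _ _ (N1tri F a b c z * / Ktri a b c z + Ntri F a b c z * (0 * (- / (Ktri a b c z * Ktri a b c z))))).
    2: ring.
    apply (Dl_ext_loc (fun w => Ntri F a b c w * / Ktri a b c w)).
    - apply (Dl_mult (Ntri F a b c) (fun w => / Ktri a b c w)); auto. apply (Dl_comp (fun y => / y) (Ktri a b c)); auto. apply Dl_inv; auto.
    - exists (r / 6 - Cmod (z - z0))%R. split. lra.
      intros w Hw. destruct (Key w) as [_ [_ [E _]]]; auto.
      assert (T := Cmod_triangle (w - z) (z - z0)). replace (w - z + (z - z0)) with (w - z0) in T by ring. lra. }
  destruct (Key z0) as [_ [KN0 [_ [_ [DK0 DN10]]]]].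
  { replace (z0 - z0) with (RtoC 0) by ring. rewrite Cmod_0. lra. }
  eexists. apply (Dl_ext_loc (fun w => N1tri F a b c w * / Ktri a b c w)).
  - apply (Dl_mult (N1tri F a b c) (fun w => / Ktri a b c w)); eauto. apply (Dl_comp (fun y => / y) (Ktri a b c)); eauto. apply Dl_inv; auto.
  - exists (r / 6)%R. split. lra. intros w Hw. apply Der; auto.
Qed.

Open Scope R_scope.
Open Scope R_scope.
Open Scope C_scope.

Lemma HD_mult F G : HD F -> HD G -> HD (fun w => F w * G w).
Proof. intros H1 H2 z Hz. destruct (H1 z Hz) as [l1 D1], (H2 z Hz) as [l2 D2]. eexists. apply Dl_mult; eauto. Qed.

Lemma cp_Dl h a w l : Dl h w l -> Dl (cpow h a) w (RtoC a * l * cpow h a w).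
Proof.
  intros H. unfold cpow. apply (Dl_comp Cexp (fun x => RtoC a * h x)). apply Dl_Cexp. apply Dl_scal. exact H.
Qed.

Lemma cp_mult h a b w : cpow h a w * cpow h b w = cpow h (a + b) w.
Proof. unfold cpow. rewrite <- Cexp_add. f_equal. rewrite RtoC_plus. ring. Qed.

Lemma cp_eq h a b w : a = b -> cpow h a w = cpow h b w.
Proof. intros ->. reflexivity. Qed.

Lemma zero_deriv (Psi0 : C -> C) : (forall w, (Cmod w < 1)%R -> Dl Psi0 w 0) ->
  forall p, (Cmod p < 1)%R -> Psi0 p = Psi0 0.
Proof.
  intros H p Hp. assert (H0 : (Cmod 0 < 1)%R) by (rewrite Cmod_0; lra).
  assert (E := seg_ftc Psi0 (fun _ => 0) 0 p ltac:(intros t Ht; apply H; apply path_disc; auto) (CS_const 0 0 p)).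
  rewrite seg_const in E. replace (Psi0 p) with ((Psi0 p - Psi0 0) + Psi0 0) by ring. rewrite <- E. ring.
Qed.

Lemma cint0_at0 F : cint0 F 0 = 0.
Proof. unfold cint0. ring. Qed.

Theorem lemma5p2_aux (g h : C -> C) :
  holoD g ->
  (forall z, inD z -> g z <> RtoC 0) ->
  holoD h ->
  (forall z, inD z -> Cexp (h z) = g z) ->
  forall (beta eps : R), eps <> 1 ->
  forall f : C -> C, holoD f ->
  forall z, inD z ->
    Sop (cpow h beta) (Top (cpow h beta) (Top (cpow h beta) f)) z =
    Cplus
      (Cmult (RtoC ((2 * beta - 1) * beta / (1 - eps)))
         (Top g (Top (cpow h (1 - eps))
            (Mop (cpow h (2 * beta - 2 + eps)) (Top (cpow h beta) f))) z))
      (Cmult (RtoC (beta ^ 2 / (1 - eps)))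
         (Top g (Top (cpow h (1 - eps))
            (Mop (cpow h (3 * beta - 2 + eps)) f)) z)).
Proof.
  intros Hg _ Hh Hgh beta eps Heps f Hf z Hz.
  apply holoD_HD in Hg, Hh, Hf. unfold inD in *.
  assert (H0 : (Cmod 0 < 1)%R) by (rewrite Cmod_0; lra).
  set (h' := Cderiv h).
  assert (Dh : forall w, (Cmod w < 1)%R -> Dl h w (h' w)) by (intros; apply HD_Dl; auto).
  assert (Dcp : forall a w, (Cmod w < 1)%R -> Dl (cpow h a) w (RtoC a * h' w * cpow h a w)).
  { intros a w Hw. apply cp_Dl. auto. }
  assert (Ccp : forall a w, (Cmod w < 1)%R -> Cderiv (cpow h a) w = RtoC a * h' w * cpow h a w).
  { intros a w Hw. apply Cderiv_eq. auto. }
  assert (HDcp : forall a, HD (cpow h a)) by (intros a w Hw; eexists; apply Dcp; auto).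
  assert (HDdcp : forall a, HD (Cderiv (cpow h a))) by (intros a; apply regularity; auto).
  assert (Dg : forall w, (Cmod w < 1)%R -> Cderiv g w = h' w * g w).
  { intros w Hw. apply Cderiv_eq. rewrite <- (Hgh w Hw).
    apply (Dl_ext_loc (fun x => Cexp (h x))).
    - apply (Dl_comp Cexp h). apply Dl_Cexp. auto.
    - exists (1 - Cmod w)%R. split. lra. intros x Hx. symmetry. apply Hgh.
      assert (T := Cmod_triangle (x - w) w). replace (x - w + w) with x in T by ring. lra. }
  assert (gcp : forall w, (Cmod w < 1)%R -> g w = cpow h 1 w).
  { intros w Hw. rewrite <- (Hgh w Hw). unfold cpow. f_equal. ring. }
  assert (HDIA : HD (fun w => f w * Cderiv (cpow h beta) w)) by (apply HD_mult; auto; apply HDdcp).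
  set (A := Top (cpow h beta) f).
  assert (DA : forall w, (Cmod w < 1)%R -> Dl A w (f w * Cderiv (cpow h beta) w)).
  { intros w Hw. exact (primitive_thm _ HDIA w Hw). }
  assert (HDA : HD A) by (intros w Hw; eexists; apply DA; auto).
  assert (A0 : A 0 = 0) by apply cint0_at0.
  assert (HDIB : HD (fun w => A w * Cderiv (cpow h beta) w)) by (apply HD_mult; auto; apply HDdcp).
  set (B := Top (cpow h beta) A).
  assert (CB : forall w, (Cmod w < 1)%R -> Cderiv B w = A w * Cderiv (cpow h beta) w).
  { intros w Hw. apply Cderiv_eq. exact (primitive_thm _ HDIB w Hw). }
  set (a1 := (2 * beta - 2 + eps)%R). set (a2 := (3 * beta - 2 + eps)%R). set (a3 := (1 - eps)%R).
  assert (HDI1 : HD (fun w => Mop (cpow h a1) A w * Cderiv (cpow h a3) w)).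
  { apply HD_mult. apply HD_mult; auto. apply HDdcp. }
  assert (HDI2 : HD (fun w => Mop (cpow h a2) f w * Cderiv (cpow h a3) w)).
  { apply HD_mult. apply HD_mult; auto. apply HDdcp. }
  set (Y1 := Top (cpow h a3) (Mop (cpow h a1) A)).
  set (Y2 := Top (cpow h a3) (Mop (cpow h a2) f)).
  assert (DY1 : forall w, (Cmod w < 1)%R -> Dl Y1 w (Mop (cpow h a1) A w * Cderiv (cpow h a3) w)).
  { intros w Hw. exact (primitive_thm _ HDI1 w Hw). }
  assert (DY2 : forall w, (Cmod w < 1)%R -> Dl Y2 w (Mop (cpow h a2) f w * Cderiv (cpow h a3) w)).
  { intros w Hw. exact (primitive_thm _ HDI2 w Hw). }
  assert (HDY1 : HD Y1) by (intros w Hw; eexists; apply DY1; auto).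
  assert (HDY2 : HD Y2) by (intros w Hw; eexists; apply DY2; auto).
  set (c1 := RtoC ((2 * beta - 1) * beta / (1 - eps))).
  set (c2 := RtoC (beta ^ 2 / (1 - eps))).
  set (a4 := (2 * beta - 1)%R).
  set (Ps := fun w => c1 * Y1 w + c2 * Y2 w - RtoC beta * cpow h a4 w * A w).
  assert (Heps' : RtoC 1 - RtoC eps <> 0).
  { rewrite <- RtoC_minus. intro E. apply RtoC_inj in E. lra. }
  assert (DPs : forall w, (Cmod w < 1)%R -> Dl Ps w 0).
  { intros w Hw. unfold Ps.
    eapply Dl_eq.
    apply Dl_minus. apply Dl_plus. apply Dl_scal. apply DY1; auto. apply Dl_scal. apply DY2; auto.
    apply (Dl_mult (fun w => RtoC beta * cpow h a4 w) A). apply Dl_scal. apply Dcp; auto. apply DA; auto.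
    unfold Mop. rewrite !Ccp by auto.
    assert (E1 : cpow h a4 w = cpow h a1 w * cpow h a3 w) by (rewrite cp_mult; apply cp_eq; unfold a1, a3, a4; ring).
    assert (E2 : cpow h a2 w = cpow h a1 w * cpow h beta w) by (rewrite cp_mult; apply cp_eq; unfold a1, a2; ring).
    rewrite E1, E2. unfold c1, c2, a3, a4.
    rewrite !RtoC_div by lra. repeat progress (rewrite ?RtoC_minus, ?RtoC_mult, ?RtoC_plus, ?RtoC_pow).
    field. exact Heps'. }
  assert (Ps0 : Ps 0 = 0).
  { unfold Ps. unfold Y1, Y2, Top. rewrite !cint0_at0, A0. ring. }
  assert (PsZ : forall p, (Cmod p < 1)%R -> c1 * Y1 p + c2 * Y2 p = RtoC beta * cpow h a4 p * A p).
  { intros p Hp. assert (E := zero_deriv Ps DPs p Hp). rewrite Ps0 in E. unfold Ps in E.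
    replace (c1 * Y1 p + c2 * Y2 p) with ((c1 * Y1 p + c2 * Y2 p - RtoC beta * cpow h a4 p * A p) + RtoC beta * cpow h a4 p * A p) by ring.
    rewrite E. ring. }
  change (cint0 (fun w => Cderiv B w * cpow h beta w) z = c1 * cint0 (fun w => Y1 w * Cderiv g w) z + c2 * cint0 (fun w => Y2 w * Cderiv g w) z).
  rewrite !cint0_seg.
  assert (HDg' : HD (Cderiv g)) by (apply regularity; auto).
  assert (CS1 : CS (fun w => Y1 w * Cderiv g w) 0 z) by (apply HD_CS; auto; apply HD_mult; auto).
  assert (CS2 : CS (fun w => Y2 w * Cderiv g w) 0 z) by (apply HD_CS; auto; apply HD_mult; auto).
  rewrite <- !seg_scal by auto. rewrite <- seg_plus by (apply CS_scal; auto).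
  apply seg_ext. intros t Ht. set (p := path 0 z t).
  assert (Hp : (Cmod p < 1)%R) by (apply path_disc; auto).
  rewrite CB, Dg by auto.
  replace (c1 * (Y1 p * (h' p * g p)) + c2 * (Y2 p * (h' p * g p))) with ((c1 * Y1 p + c2 * Y2 p) * (h' p * g p)) by ring.
  rewrite PsZ by auto. rewrite Ccp by auto. rewrite gcp by auto.
  assert (E3 : cpow h a4 p * cpow h 1 p = cpow h beta p * cpow h beta p) by (rewrite !cp_mult; apply cp_eq; unfold a4; ring).
  transitivity (RtoC beta * A p * h' p * (cpow h a4 p * cpow h 1 p)). rewrite E3. ring. ring.
Qed.


Close Scope C_scope.
Open Scope R_scope.

Theorem lemma5p2 (g h : C -> C) :
  holoD g ->
  (forall z, inD z -> g z <> RtoC 0) ->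
  holoD h ->
  (forall z, inD z -> Cexp (h z) = g z) ->
  forall (beta eps : R), eps <> 1 ->
  forall f : C -> C, holoD f ->
  forall z, inD z ->
    Sop (cpow h beta) (Top (cpow h beta) (Top (cpow h beta) f)) z =
    Cplus
      (Cmult (RtoC ((2 * beta - 1) * beta / (1 - eps)))
         (Top g (Top (cpow h (1 - eps))
            (Mop (cpow h (2 * beta - 2 + eps)) (Top (cpow h beta) f))) z))
      (Cmult (RtoC (beta ^ 2 / (1 - eps)))
         (Top g (Top (cpow h (1 - eps))
            (Mop (cpow h (3 * beta - 2 + eps)) f)) z)).
Proof.
  exact (lemma5p2_aux g h).
Qed.
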